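(* Let $q\ge 1$ and assume Hypothesis (H$_q$). Then for all $x\in[a,b]$, $\lambda\in[0,1]$ and $\theta>0$, $$\big|S_f(mx,\lambda,\theta,ma,mb)\big|\le\frac{m^\theta A_1(\theta,\lambda)^{1-\frac1q}}{b-a}\Big\{(x-a)^{\theta+1}\Big(|f'(mx)|^qA_2(\alpha,\theta,\lambda)+m|f'(a)|^qA_3(\alpha,\theta,\lambda)\Big)^{\frac1q}+(b-x)^{\theta+1}\Big(|f'(mx)|^qA_2(\alpha,\theta,\lambda)+m|f'(b)|^qA_3(\alpha,\theta,\lambda)\Big)^{\frac1q}\Big\}.$$
   Context: Let $\Gamma$ denote Euler's Gamma function. Given $m\in(0,1]$, $a<b$, $x\in[a,b]$, $\lambda\in[0,1]$, $\theta>0$ and a function $f$ integrable on $[ma,mb]$, the Riemann–Liouville fractional integrals appearing below are $J^\theta_{(mx)^-}f(ma)=\frac{1}{\Gamma(\theta)}\int_{ma}^{mx}(s-ma)^{\theta-1}f(s)\,ds$ and $J^\theta_{(mx)^+}f(mb)=\frac{1}{\Gamma(\theta)}\int_{mx}^{mb}(mb-s)^{\theta-1}f(s)\,ds$ (each equal to $0$ if its interval of integration is degenerate), and $$S_f(mx,\lambda,\theta,ma,mb)=(1-\lambda)m^{\theta-1}\frac{(x-a)^\theta+(b-x)^\theta}{b-a}f(mx)+\lambda m^{\theta-1}\frac{(x-a)^\theta f(ma)+(b-x)^\theta f(mb)}{b-a}-\frac{\Gamma(\theta+1)}{m(b-a)}\Big[J^\theta_{(mx)^-}f(ma)+J^\theta_{(mx)^+}f(mb)\Big].$$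 $(\alpha,m)$-convexity: for $(\alpha,m)\in[0,1]\times(0,1]$ and an interval $K\subseteq[0,\infty)$, a function $g:K\to\mathbb{R}$ is $(\alpha,m)$-convex on $K$ if $g(tX+m(1-t)Y)\le t^\alpha g(X)+m(1-t^\alpha)g(Y)$ for all $X,Y\in K$ and $t\in[0,1]$ with $tX+m(1-t)Y\in K$ (convention $0^0=1$). Hypothesis (H$_q$): $I\subseteq[0,\infty)$ is an interval, $f:I\to\mathbb{R}$ is differentiable on the interior $I^\circ$, $m\in(0,1]$, $\alpha\in[0,1]$, $a<b$ with $ma,b\in I^\circ$, $f'$ is Lebesgue integrable on $[ma,mb]$, and $|f'|^q$ is $(\alpha,m)$-convex on $[ma,b]$. Constants: $A_1(\theta,\lambda)=\frac{2\theta\lambda^{1+\frac1\theta}+1}{\theta+1}-\lambda$, $A_2(\alpha,\theta,\lambda)=\frac{2\theta\lambda^{1+\frac{1+\alpha}{\theta}}}{(\alpha+1)(\alpha+\theta+1)}+\frac{1}{\alpha+\theta+1}-\frac{\lambda}{\alpha+1}$, $A_3(\alpha,\theta,\lambda)=A_1(\theta,\lambda)-A_2(\alpha,\theta,\lambda)$. *)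

(* Defs.v *)
From Stdlib Require Import Reals Lra Classical ClassicalEpsilon.
Open Scope R_scope.

(* Real power with the conventions x^y = 0 for x <= 0, y <> 0 and x^0 = 1
   (in particular 0^0 = 1, 0^y = 0 for y > 0). For x > 0 it is Rpower. *)
Definition rpow (x y : R) : R :=
  if Rlt_dec 0 x then Rpower x y
  else if Req_EM_T y 0 then 1 else 0.

(* Total Riemann integral: RiemannInt when integrable, 0 otherwise. *)
Definition Rint (g : R -> R) (c d : R) : R :=
  match excluded_middle_informative (inhabited (Riemann_integrable g c d)) with
  | left H => RiemannInt (epsilon H (fun _ => True))
  | right _ => 0
  end.

(* Limit as h -> 0+ (0 if it does not exist). *)
Definition lim0p (g : R -> R) : R :=
  match excluded_middle_informative
     (exists l, forall eps, 0 < eps -> exists del, 0 < del /\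
        forall h, 0 < h < del -> Rabs (g h - l) < eps) with
  | left H => proj1_sig (constructive_indefinite_description _ H)
  | right _ => 0
  end.

(* Limit as y -> +infinity (0 if it does not exist). *)
Definition lim_pinf (g : R -> R) : R :=
  match excluded_middle_informative
     (exists l, forall eps, 0 < eps -> exists N,
        forall y, N < y -> Rabs (g y - l) < eps) with
  | left H => proj1_sig (constructive_indefinite_description _ H)
  | right _ => 0
  end.

Definition Gamma (th : R) : R :=
  lim_pinf (fun N => lim0p (fun h => Rint (fun t => rpow t (th - 1) * exp (- t)) h N)).

(* RL_left th f c d  = J^th_{d^-} f(c) = 1/Gamma(th) int_c^d (s-c)^(th-1) f(s) ds
   RL_right th f c d = J^th_{c^+} f(d) = 1/Gamma(th) int_c^d (d-s)^(th-1) f(s) ds *)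
Definition RL_left (th : R) (f : R -> R) (c d : R) : R :=
  if Req_EM_T c d then 0 else
  / Gamma th * lim0p (fun h => Rint (fun s => rpow (s - c) (th - 1) * f s) (c + h) d).

Definition RL_right (th : R) (f : R -> R) (c d : R) : R :=
  if Req_EM_T c d then 0 else
  / Gamma th * lim0p (fun h => Rint (fun s => rpow (d - s) (th - 1) * f s) c (d - h)).

Definition S_RL (f : R -> R) (m x lam th a b : R) : R :=
  (1 - lam) * rpow m (th - 1) * (rpow (x - a) th + rpow (b - x) th) / (b - a) * f (m * x)
  + lam * rpow m (th - 1) * (rpow (x - a) th * f (m * a) + rpow (b - x) th * f (m * b)) / (b - a)
  - Gamma (th + 1) / (m * (b - a))
      * (RL_left th f (m * a) (m * x) + RL_right th f (m * x) (m * b)).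

Definition alpha_m_convex (alpha m : R) (K : R -> Prop) (g : R -> R) : Prop :=
  forall X Y t, K X -> K Y -> 0 <= t <= 1 -> K (t * X + m * (1 - t) * Y) ->
    g (t * X + m * (1 - t) * Y) <= rpow t alpha * g X + m * (1 - rpow t alpha) * g Y.

Definition is_interval (I : R -> Prop) : Prop :=
  forall x y z, I x -> I z -> x <= y <= z -> I y.

Definition Aconst1 (th lam : R) : R :=
  (2 * th * rpow lam (1 + 1 / th) + 1) / (th + 1) - lam.
Definition Aconst2 (alpha th lam : R) : R :=
  2 * th * rpow lam (1 + (1 + alpha) / th) / ((alpha + 1) * (alpha + th + 1))
  + 1 / (alpha + th + 1) - lam / (alpha + 1).
Definition Aconst3 (alpha th lam : R) : R := Aconst1 th lam - Aconst2 alpha th lam.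

(* Main.v *)
Require Import Defs.
From Coquelicot Require Import Coquelicot.
From Stdlib Require Import Reals Lra Psatz Classical ClassicalEpsilon.
Open Scope R_scope.

Lemma rpow_pos x y : 0 < x -> rpow x y = Rpower x y.
Proof. intros H; unfold rpow; destruct (Rlt_dec 0 x); [reflexivity|lra]. Qed.

Lemma rpow_nonpos x y : x <= 0 -> y <> 0 -> rpow x y = 0.
Proof. intros H Hy; unfold rpow; destruct (Rlt_dec 0 x); [lra|].
  destruct (Req_EM_T y 0); [contradiction|reflexivity]. Qed.

Lemma rpow_0 x : rpow x 0 = 1.
Proof. unfold rpow; destruct (Rlt_dec 0 x). apply Rpower_O; auto.
  destruct (Req_EM_T 0 0); [reflexivity|congruence]. Qed.

Lemma Rpower_pos x y : 0 < Rpower x y.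
Proof. unfold Rpower; apply exp_pos. Qed.

Lemma rpow_ge0 x y : 0 <= rpow x y.
Proof. unfold rpow; destruct (Rlt_dec 0 x). left; apply Rpower_pos.
  destruct (Req_EM_T y 0); lra. Qed.

Lemma rpow_gt0 x y : 0 < x -> 0 < rpow x y.
Proof. intros; rewrite rpow_pos; auto; apply Rpower_pos. Qed.

Lemma continuity_rpow x r : 0 <= r -> continuity_pt (fun t => rpow t r) x.
Proof.
  intros Hr. destruct (Req_dec r 0) as [->|Hr0].
  { apply continuity_pt_ext with (f := fun _ => 1). intros; rewrite rpow_0; auto.
    apply continuity_pt_const; intros ? ?; auto. }
  assert (Hr' : 0 < r) by lra.
  destruct (Rlt_dec 0 x) as [Hx|Hx].
  { apply continuity_pt_locally_ext with (f := fun t => Rpower t r) (a := x); auto.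
    intros y Hy. unfold Rdist in Hy. apply Rabs_def2 in Hy. rewrite rpow_pos; auto; lra.
    apply derivable_continuous_pt. exists (r * Rpower x (r - 1)).
    apply derivable_pt_lim_power; auto. }
  destruct (Req_dec x 0) as [->|Hx0].
  { intros eps Heps. exists (Rpower eps (/ r)). split. apply Rpower_pos.
    intros y [_ Hy]. simpl in *. unfold R_dist in *.
    rewrite (rpow_nonpos 0) by lra. rewrite Rminus_0_r in *.
    destruct (Rlt_dec 0 y) as [Hy0|Hy0].
    - rewrite rpow_pos by auto. rewrite Rabs_right by (left; apply Rpower_pos).
      rewrite Rabs_right in Hy by lra.
      replace eps with (Rpower (Rpower eps (/r)) r).
      apply Rlt_Rpower_l; lra.
      rewrite Rpower_mult. rewrite Rinv_l by lra. apply Rpower_1; auto.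
    - rewrite rpow_nonpos by lra. rewrite Rabs_R0; auto. }
  { apply continuity_pt_locally_ext with (f := fun _ => 0) (a := -x). lra.
    intros y Hy. unfold Rdist in Hy. apply Rabs_def2 in Hy.
    rewrite rpow_nonpos; lra.
    apply continuity_pt_const; intros ? ?; auto. }
Qed.

Lemma continuity_rpow_pos x r : 0 < x -> continuity_pt (fun t => rpow t r) x.
Proof.
  intros Hx.
  apply continuity_pt_locally_ext with (f := fun t => Rpower t r) (a := x); auto.
  intros y Hy. unfold Rdist in Hy. apply Rabs_def2 in Hy. rewrite rpow_pos; auto; lra.
  apply derivable_continuous_pt. exists (r * Rpower x (r - 1)).
  apply derivable_pt_lim_power; auto.
Qed.

Lemma deriv_rpow x r : 0 < x -> derivable_pt_lim (fun t => rpow t r) x (r * rpow x (r - 1)).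
Proof.
  intros Hx. rewrite rpow_pos by auto.
  apply derivable_pt_lim_locally_ext with (f := fun t => Rpower t r) (a := 0) (b := x + 1).
  lra. intros z Hz. rewrite rpow_pos; auto; lra.
  apply derivable_pt_lim_power; auto.
Qed.

Lemma rpow_1 x : rpow 1 x = 1.
Proof. rewrite rpow_pos by lra. unfold Rpower. rewrite ln_1, Rmult_0_r, exp_0. auto. Qed.

Lemma rpow_0_l y : 0 < y -> rpow 0 y = 0.
Proof. intros; apply rpow_nonpos; lra. Qed.

Lemma rpow_le_l a b c : 0 <= c -> 0 <= a <= b -> rpow a c <= rpow b c.
Proof.
  intros Hc [Ha Hab]. destruct (Req_dec c 0) as [->|Hc0]. rewrite !rpow_0; lra.
  destruct (Rle_lt_or_eq_dec _ _ Ha) as [Ha'| <-].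
  rewrite !rpow_pos by lra. apply Rle_Rpower_l; lra.
  rewrite rpow_0_l by lra. apply rpow_ge0.
Qed.

Lemma rpow_lt_l a b c : 0 < c -> 0 <= a < b -> rpow a c < rpow b c.
Proof.
  intros Hc [Ha Hab].
  destruct (Rle_lt_or_eq_dec _ _ Ha) as [Ha'| <-].
  rewrite !rpow_pos by lra. apply Rlt_Rpower_l; lra.
  rewrite rpow_0_l by lra. apply rpow_gt0; lra.
Qed.

Lemma rpow_mult x y z : 0 <= x -> y <> 0 -> y * z <> 0 -> rpow (rpow x y) z = rpow x (y * z).
Proof.
  intros Hx Hy Hyz. destruct (Rle_lt_or_eq_dec _ _ Hx) as [Hx'| <-].
  rewrite (rpow_pos x) by auto. rewrite rpow_pos by apply Rpower_pos. rewrite rpow_pos by auto.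
  apply Rpower_mult.
  assert (z <> 0) by (intro; subst; apply Hyz; ring).
  rewrite !(rpow_nonpos 0) by (auto; lra). auto.
Qed.

Lemma rpow_1_r x : 0 <= x -> rpow x 1 = x.
Proof. intros Hx. destruct (Rle_lt_or_eq_dec _ _ Hx) as [H| <-].
  rewrite rpow_pos by auto; apply Rpower_1; auto. apply rpow_0_l; lra. Qed.

Lemma rpow_inv_pow lam th : 0 < th -> 0 <= lam -> rpow (rpow lam (/ th)) th = lam.
Proof. intros Hth Hl. rewrite rpow_mult; auto.
  rewrite Rinv_l by lra. apply rpow_1_r; auto.
  apply Rinv_neq_0_compat; lra. rewrite Rinv_l; lra. Qed.

Definition lim0 (g : R -> R) (l : R) := forall eps, 0 < eps -> exists del, 0 < del /\
        forall h, 0 < h < del -> Rabs (g h - l) < eps.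
Definition limi (g : R -> R) (l : R) := forall eps, 0 < eps -> exists N,
        forall y, N < y -> Rabs (g y - l) < eps.

Lemma lim0_unique g l1 l2 : lim0 g l1 -> lim0 g l2 -> l1 = l2.
Proof.
  intros H1 H2. apply Rminus_diag_uniq_sym. apply Rabs_eq_0.
  destruct (Rle_lt_or_eq_dec 0 (Rabs (l2 - l1)) (Rabs_pos _)) as [Hp|Hp]; [|auto].
  exfalso. set (e := Rabs (l2 - l1) / 2).
  destruct (H1 e) as [d1 [Hd1 P1]]. unfold e; lra.
  destruct (H2 e) as [d2 [Hd2 P2]]. unfold e; lra.
  set (h := Rmin d1 d2 / 2).
  assert (0 < Rmin d1 d2) by (apply Rmin_pos; auto).
  assert (Rmin d1 d2 <= d1) by apply Rmin_l. assert (Rmin d1 d2 <= d2) by apply Rmin_r.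
  specialize (P1 h). specialize (P2 h).
  assert (Rabs (g h - l1) < e) by (apply P1; unfold h; lra).
  assert (Rabs (g h - l2) < e) by (apply P2; unfold h; lra).
  assert (Rabs (l2 - l1) <= Rabs (g h - l1) + Rabs (g h - l2)).
  { replace (l2 - l1) with ((g h - l1) - (g h - l2)) by ring.
    eapply Rle_trans. apply Rabs_triang. rewrite Rabs_Ropp; lra. }
  unfold e in *; lra.
Qed.

Lemma lim0p_eq g l : lim0 g l -> lim0p g = l.
Proof.
  intros H. unfold lim0p. destruct excluded_middle_informative as [E|E].
  - destruct constructive_indefinite_description as [l' Hl']. simpl.
    apply (lim0_unique g); auto.
  - exfalso; apply E; exists l; auto.
Qed.

Lemma limi_unique g l1 l2 : limi g l1 -> limi g l2 -> l1 = l2.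
Proof.
  intros H1 H2. apply Rminus_diag_uniq_sym. apply Rabs_eq_0.
  destruct (Rle_lt_or_eq_dec 0 (Rabs (l2 - l1)) (Rabs_pos _)) as [Hp|Hp]; [|auto].
  exfalso. set (e := Rabs (l2 - l1) / 2).
  destruct (H1 e) as [d1 P1]. unfold e; lra.
  destruct (H2 e) as [d2 P2]. unfold e; lra.
  set (h := Rmax d1 d2 + 1).
  assert (Rmax d1 d2 >= d1) by (apply Rle_ge, Rmax_l). assert (Rmax d1 d2 >= d2) by (apply Rle_ge, Rmax_r).
  specialize (P1 h). specialize (P2 h).
  assert (Rabs (g h - l1) < e) by (apply P1; unfold h; lra).
  assert (Rabs (g h - l2) < e) by (apply P2; unfold h; lra).
  assert (Rabs (l2 - l1) <= Rabs (g h - l1) + Rabs (g h - l2)).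
  { replace (l2 - l1) with ((g h - l1) - (g h - l2)) by ring.
    eapply Rle_trans. apply Rabs_triang. rewrite Rabs_Ropp; lra. }
  unfold e in *; lra.
Qed.

Lemma lim_pinf_eq g l : limi g l -> lim_pinf g = l.
Proof.
  intros H. unfold lim_pinf. destruct excluded_middle_informative as [E|E].
  - destruct constructive_indefinite_description as [l' Hl']. simpl.
    apply (limi_unique g); auto.
  - exfalso; apply E; exists l; auto.
Qed.

Lemma mono0 g d0 B : 0 < d0 ->
  (forall h1 h2, 0 < h1 <= h2 -> h2 < d0 -> g h2 <= g h1) ->
  (forall h, 0 < h < d0 -> g h <= B) -> exists l, lim0 g l.
Proof.
  intros Hd Hmono Hb.
  set (E := fun y => exists h, 0 < h < d0 /\ y = g h).
  assert (HE : bound E). { exists B. intros y [h [Hh ->]]. auto. }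
  assert (HE2 : exists y, E y). { exists (g (d0/2)). exists (d0/2). split; [lra|auto]. }
  destruct (completeness E HE HE2) as [l [Hub Hlub]].
  exists l. intros eps Heps.
  assert (exists h1, 0 < h1 < d0 /\ l - eps < g h1) as [h1 [Hh1 Hg1]].
  { apply Classical_Prop.NNPP. intros Hn.
    assert (l <= l - eps); [|lra].
    apply Hlub. intros y [h [Hh ->]].
    apply Rnot_lt_le. intros Hc. apply Hn. exists h; auto. }
  exists h1. split; [lra|]. intros h Hh.
  assert (g h <= l) by (apply Hub; exists h; split; [lra|auto]).
  assert (g h1 <= g h) by (apply Hmono; lra).
  apply Rabs_def1; lra.
Qed.

Lemma monoi g N0 B :
  (forall y1 y2, N0 < y1 <= y2 -> g y1 <= g y2) ->
  (forall y, N0 < y -> g y <= B) -> exists l, limi g l.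
Proof.
  intros Hmono Hb.
  set (E := fun y => exists h, N0 < h /\ y = g h).
  assert (HE : bound E). { exists B. intros y [h [Hh ->]]. auto. }
  assert (HE2 : exists y, E y). { exists (g (N0+1)). exists (N0+1). split; [lra|auto]. }
  destruct (completeness E HE HE2) as [l [Hub Hlub]].
  exists l. intros eps Heps.
  assert (exists h1, N0 < h1 /\ l - eps < g h1) as [h1 [Hh1 Hg1]].
  { apply Classical_Prop.NNPP. intros Hn.
    assert (l <= l - eps); [|lra].
    apply Hlub. intros y [h [Hh ->]].
    apply Rnot_lt_le. intros Hc. apply Hn. exists h; auto. }
  exists h1. intros h Hh.
  assert (g h <= l) by (apply Hub; exists h; split; [lra|auto]).
  assert (g h1 <= g h) by (apply Hmono; lra).
  apply Rabs_def1; lra.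
Qed.

Lemma lim0_le g l d B : 0 < d -> lim0 g l -> (forall h, 0 < h < d -> g h <= B) -> l <= B.
Proof.
  intros Hd H Hb. apply Rnot_lt_le; intros Hc.
  destruct (H (l - B)) as [d1 [Hd1 P]]; [lra|].
  set (h := Rmin d d1 / 2). assert (0 < Rmin d d1) by (apply Rmin_pos; auto).
  assert (Rmin d d1 <= d) by apply Rmin_l. assert (Rmin d d1 <= d1) by apply Rmin_r.
  specialize (P h). specialize (Hb h).
  assert (Rabs (g h - l) < l - B) by (apply P; unfold h; lra).
  assert (g h <= B) by (apply Hb; unfold h; lra).
  apply Rabs_def2 in H3. lra.
Qed.

Lemma limi_le g l N B : limi g l -> (forall y, N < y -> g y <= B) -> l <= B.
Proof.
  intros H Hb. apply Rnot_lt_le; intros Hc.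
  destruct (H (l - B)) as [N1 P]; [lra|].
  set (h := Rmax N N1 + 1). 
  assert (Rmax N N1 >= N) by (apply Rle_ge, Rmax_l). assert (Rmax N N1 >= N1) by (apply Rle_ge, Rmax_r).
  specialize (P h). specialize (Hb h).
  assert (Rabs (g h - l) < l - B) by (apply P; unfold h; lra).
  assert (g h <= B) by (apply Hb; unfold h; lra).
  apply Rabs_def2 in H2. lra.
Qed.

Lemma lim0_ext g1 g2 l d : 0 < d -> (forall h, 0 < h < d -> g1 h = g2 h) -> lim0 g1 l -> lim0 g2 l.
Proof.
  intros Hd He H eps Heps. destruct (H eps Heps) as [d1 [Hd1 P]].
  exists (Rmin d d1). split. apply Rmin_pos; auto.
  intros h Hh. assert (Rmin d d1 <= d) by apply Rmin_l. assert (Rmin d d1 <= d1) by apply Rmin_r.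
  rewrite <- He by lra. apply P; lra.
Qed.

Lemma limi_ext g1 g2 l N : (forall y, N < y -> g1 y = g2 y) -> limi g1 l -> limi g2 l.
Proof.
  intros He H eps Heps. destruct (H eps Heps) as [N1 P].
  exists (Rmax N N1). intros y Hy.
  assert (Rmax N N1 >= N) by (apply Rle_ge, Rmax_l). assert (Rmax N N1 >= N1) by (apply Rle_ge, Rmax_r).
  rewrite <- He by lra. apply P; lra.
Qed.

Lemma lim0_plus g1 g2 l1 l2 : lim0 g1 l1 -> lim0 g2 l2 -> lim0 (fun h => g1 h + g2 h) (l1 + l2).
Proof.
  intros H1 H2 eps Heps.
  destruct (H1 (eps/2)) as [d1 [Hd1 P1]]; [lra|].
  destruct (H2 (eps/2)) as [d2 [Hd2 P2]]; [lra|].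
  exists (Rmin d1 d2). split. apply Rmin_pos; auto.
  intros h Hh. assert (Rmin d1 d2 <= d1) by apply Rmin_l. assert (Rmin d1 d2 <= d2) by apply Rmin_r.
  specialize (P1 h). specialize (P2 h).
  replace (g1 h + g2 h - (l1 + l2)) with ((g1 h - l1) + (g2 h - l2)) by ring.
  eapply Rle_lt_trans. apply Rabs_triang.
  assert (Rabs (g1 h - l1) < eps/2) by (apply P1; lra).
  assert (Rabs (g2 h - l2) < eps/2) by (apply P2; lra). lra.
Qed.

Lemma lim0_scal c g l : lim0 g l -> lim0 (fun h => c * g h) (c * l).
Proof.
  intros H eps Heps.
  destruct (H (eps / (Rabs c + 1))) as [d [Hd P]].
  { apply Rdiv_lt_0_compat; auto. pose proof (Rabs_pos c); lra. }
  exists d. split; auto. intros h Hh.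
  replace (c * g h - c * l) with (c * (g h - l)) by ring. rewrite Rabs_mult.
  pose proof (Rabs_pos c). specialize (P h Hh).
  apply Rle_lt_trans with ((Rabs c + 1) * Rabs (g h - l)).
  apply Rmult_le_compat_r. apply Rabs_pos. lra.
  apply Rmult_lt_reg_l with (/ (Rabs c + 1)). apply Rinv_0_lt_compat; lra.
  rewrite <- Rmult_assoc, Rinv_l by lra. unfold Rdiv in P. lra.
Qed.

Lemma lim0_const c : lim0 (fun _ => c) c.
Proof. intros eps Heps; exists 1; split; [lra|]. intros; rewrite Rminus_diag, Rabs_R0; auto. Qed.

Lemma lim0_cont g : continuity_pt g 0 -> lim0 g (g 0).
Proof.
  intros H eps Heps. destruct (H eps Heps) as [d [Hd P]]. exists d. split; auto.
  intros h Hh. apply P. split. unfold D_x, no_cond. split; auto. lra.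
  simpl. unfold R_dist. rewrite Rminus_0_r, Rabs_right; lra.
Qed.

Lemma lim0_comp_scal g l D : 0 < D -> lim0 g l -> lim0 (fun h => g (h / D)) l.
Proof.
  intros HD H eps Heps. destruct (H eps Heps) as [d [Hd P]].
  exists (d * D). split. nra. intros h Hh. apply P. split.
  apply Rdiv_lt_0_compat; lra. apply Rmult_lt_reg_r with D; auto.
  unfold Rdiv. rewrite Rmult_assoc, Rinv_l; lra.
Qed.

Lemma lim0_abs_le g l B d : 0 < d -> lim0 g l -> (forall h, 0 < h < d -> Rabs (g h) <= B) -> Rabs l <= B.
Proof.
  intros Hd H Hb. apply Rabs_le. split.
  - assert (- l <= B); [|lra].
    apply (lim0_le (fun h => - g h) (- l) d); auto.
    replace (- l) with (-1 * l) by ring.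
    apply (lim0_ext (fun h => -1 * g h)) with d; auto. intros; ring.
    apply lim0_scal; auto.
    intros h Hh; specialize (Hb h Hh); apply Rabs_le_between in Hb. lra.
  - apply (lim0_le g l d); auto. intros h Hh; specialize (Hb h Hh); apply Rabs_le_between in Hb. lra.
Qed.

Lemma cpt_cont f x : continuity_pt f x -> continuous f x.
Proof. intros H; apply continuity_pt_filterlim; auto. Qed.

Definition cont_on (f : R -> R) a b := forall x, a <= x <= b -> continuity_pt f x.

Lemma ex_RInt_cont f a b : a <= b -> cont_on f a b -> ex_RInt f a b.
Proof. intros Hab H. apply (ex_RInt_continuous (V := R_CompleteNormedModule)). intros z Hz.
  rewrite Rmin_left, Rmax_right in Hz by lra. apply cpt_cont, H; auto. Qed.

Lemma Rint_RInt g c d : ex_RInt g c d -> Rint g c d = RInt g c d.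
Proof.
  intros H. unfold Rint. destruct excluded_middle_informative as [E|E].
  - rewrite (RInt_Reals g c d (epsilon E (fun _ => True))). reflexivity.
  - exfalso; apply E; constructor; apply ex_RInt_Reals_0; auto.
Qed.

Lemma RInt_plusR f g a b : ex_RInt f a b -> ex_RInt g a b ->
  RInt (fun x => f x + g x) a b = RInt f a b + RInt g a b.
Proof. intros; exact (RInt_plus f g a b H H0). Qed.
Lemma RInt_minusR f g a b : ex_RInt f a b -> ex_RInt g a b ->
  RInt (fun x => f x - g x) a b = RInt f a b - RInt g a b.
Proof. intros; exact (RInt_minus f g a b H H0). Qed.
Lemma RInt_scalR f c a b : ex_RInt f a b ->
  RInt (fun x => c * f x) a b = c * RInt f a b.
Proof. intros; exact (RInt_scal f a b c H). Qed.
Lemma RInt_constR c a b : RInt (fun _ => c) a b = c * (b - a).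
Proof. rewrite RInt_const. unfold scal; simpl; unfold mult; simpl; ring. Qed.
Lemma RInt_ChaslesR f a b c : ex_RInt f a b -> ex_RInt f b c ->
  RInt f a b + RInt f b c = RInt f a c.
Proof. intros; exact (RInt_Chasles f a b c H H0). Qed.

Lemma cont_on_sub f a b c d : a <= c -> d <= b -> cont_on f a b -> cont_on f c d.
Proof. intros ? ? H x Hx; apply H; lra. Qed.

Lemma FTC f df a b : a <= b ->
  (forall x, a <= x <= b -> derivable_pt_lim f x (df x)) -> cont_on df a b ->
  RInt df a b = f b - f a.
Proof.
  intros Hab Hd Hc. apply is_RInt_unique.
  apply (is_RInt_derive f df a b).
  - intros x Hx. rewrite Rmin_left, Rmax_right in Hx by lra. apply is_derive_Reals, Hd; auto.
  - intros x Hx. rewrite Rmin_left, Rmax_right in Hx by lra. apply cpt_cont, Hc; auto.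
Qed.

Lemma RInt_bound_lower_cont f a b : a < b -> cont_on f a b ->
  forall eps, 0 < eps -> exists del, 0 < del /\ forall e, a < e < a + del -> e <= b ->
   Rabs (RInt f e b - RInt f a b) < eps.
Proof.
  intros Hab Hc eps Heps.
  destruct (continuity_ab_maj (fun x => Rabs (f x)) a b (Rlt_le _ _ Hab)) as [xm [Hm Hxm]].
  { intros x Hx. apply continuity_pt_comp with (f2 := Rabs). apply Hc; auto. apply Rcontinuity_abs. }
  set (M := Rabs (f xm) + 1).
  exists (eps / M). split. apply Rdiv_lt_0_compat; auto. unfold M; pose proof (Rabs_pos (f xm)); lra.
  intros e He Heb.
  assert (ex_RInt f a e) by (apply ex_RInt_cont; [lra|apply (cont_on_sub f a b); auto; lra]).
  assert (ex_RInt f e b) by (apply ex_RInt_cont; [lra|apply (cont_on_sub f a b); auto; lra]).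
  rewrite <- (RInt_ChaslesR f a e b) by auto.
  replace (RInt f e b - (RInt f a e + RInt f e b)) with (- RInt f a e) by ring.
  rewrite Rabs_Ropp. eapply Rle_lt_trans. apply (abs_RInt_le_const f a e M); auto. lra.
  intros x Hx. specialize (Hm x). assert (Rabs (f x) <= Rabs (f xm)) by (apply Hm; lra). unfold M; lra.
  assert (0 < M) by (unfold M; pose proof (Rabs_pos (f xm)); lra).
  apply Rmult_lt_reg_r with (/ M). apply Rinv_0_lt_compat; auto.
  replace ((e - a) * M * / M) with (e - a) by (field; lra). unfold Rdiv in He; lra.
Qed.

Lemma FTC0 f df a b : a < b -> continuity_pt f a ->
  (forall x, a < x <= b -> derivable_pt_lim f x (df x)) -> cont_on df a b ->
  RInt df a b = f b - f a.
Proof.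
  intros Hab Hfa Hd Hc.
  apply Rminus_diag_uniq. apply Rabs_eq_0.
  destruct (Rle_lt_or_eq_dec 0 (Rabs (RInt df a b - (f b - f a))) (Rabs_pos _)) as [Hp|Hp]; [|auto].
  exfalso. set (eps := Rabs (RInt df a b - (f b - f a))).
  destruct (RInt_bound_lower_cont df a b Hab Hc (eps/2)) as [d1 [Hd1 P1]]. unfold eps; lra.
  destruct (Hfa (eps/2)) as [d2 [Hd2 P2]]. unfold eps; lra.
  set (e := a + Rmin (Rmin d1 d2) (b - a) / 2).
  assert (0 < Rmin (Rmin d1 d2) (b - a)) by (repeat apply Rmin_pos; lra).
  assert (Rmin (Rmin d1 d2) (b - a) <= Rmin d1 d2) by apply Rmin_l.
  assert (Rmin (Rmin d1 d2) (b - a) <= b - a) by apply Rmin_r.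
  assert (Rmin d1 d2 <= d1) by apply Rmin_l. assert (Rmin d1 d2 <= d2) by apply Rmin_r.
  assert (HI : RInt df e b = f b - f e).
  { apply FTC. unfold e; lra. intros x Hx; apply Hd; unfold e in *; lra.
    apply (cont_on_sub df a b); auto; unfold e; lra. }
  assert (Rabs (RInt df e b - RInt df a b) < eps/2) by (apply P1; unfold e; lra).
  assert (Rabs (f e - f a) < eps/2).
  { apply P2. split. unfold D_x, no_cond; split; auto; unfold e; lra.
    simpl; unfold R_dist; rewrite Rabs_right; unfold e; lra. }
  assert (eps <= Rabs (RInt df e b - RInt df a b) + Rabs (f e - f a)).
  { unfold eps. replace (RInt df a b - (f b - f a)) with (- (RInt df e b - RInt df a b) + (- (f e - f a))) by (rewrite HI; ring).
    eapply Rle_trans. apply Rabs_triang. rewrite !Rabs_Ropp; lra. }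
  lra.
Qed.

Lemma deriv_prim H u s : (forall x, continuity_pt H x) ->
  derivable_pt_lim (fun t => RInt H u t) s (H s).
Proof.
  intros Hc. apply is_derive_Reals. apply (is_derive_RInt H (fun t => RInt H u t) u s).
  apply filter_forall. intros t. apply (RInt_correct (V := R_CompleteNormedModule)).
  apply (ex_RInt_continuous (V := R_CompleteNormedModule)).
  intros; apply cpt_cont, Hc.
  apply cpt_cont, Hc.
Qed.

Lemma incr_deriv f df u v : u <= v ->
  (forall x, u <= x <= v -> derivable_pt_lim f x (df x)) ->
  (forall x, u <= x <= v -> 0 <= df x) -> f u <= f v.
Proof.
  intros Huv Hd Hp. destruct (Rle_lt_or_eq_dec _ _ Huv) as [Hl| ->]; [|lra].
  destruct (MVT_cor2 f df u v Hl Hd) as [c [Hc Hc2]].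
  assert (0 <= df c) by (apply Hp; lra). nra.
Qed.

Lemma IBP f df g dg a b : a <= b ->
  (forall x, a <= x <= b -> derivable_pt_lim f x (df x)) ->
  (forall x, a <= x <= b -> derivable_pt_lim g x (dg x)) ->
  cont_on df a b -> cont_on dg a b ->
  RInt (fun x => df x * g x) a b = f b * g b - f a * g a - RInt (fun x => f x * dg x) a b.
Proof.
  intros Hab Hf Hg Hcf Hcg.
  assert (Hcf0 : cont_on f a b) by (intros x Hx; apply derivable_continuous_pt; exists (df x); apply Hf; auto).
  assert (Hcg0 : cont_on g a b) by (intros x Hx; apply derivable_continuous_pt; exists (dg x); apply Hg; auto).
  assert (E : RInt (fun x => df x * g x + f x * dg x) a b = f b * g b - f a * g a).
  { apply (FTC (fun x => f x * g x)); auto.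
    intros x Hx. apply derivable_pt_lim_mult; auto.
    intros x Hx. apply continuity_pt_plus; apply continuity_pt_mult; auto. }
  rewrite RInt_plusR in E. lra.
  apply ex_RInt_cont; auto. intros x Hx; apply continuity_pt_mult; auto.
  apply ex_RInt_cont; auto. intros x Hx; apply continuity_pt_mult; auto.
Qed.

Lemma RInt_extR (f g : R -> R) a b : (forall x, Rmin a b < x < Rmax a b -> f x = g x) ->
  RInt f a b = RInt g a b.
Proof. intros H; apply RInt_ext; auto. Qed.

Lemma RInt_pointR f a : RInt f a a = 0.
Proof. rewrite RInt_point. reflexivity. Qed.

Lemma lip_bound F dF H u v : u <= v ->
  (forall t, u <= t <= v -> derivable_pt_lim F t (dF t)) ->
  (forall t, u <= t <= v -> Rabs (dF t) <= H t) ->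
  (forall x, continuity_pt H x) ->
  Rabs (F v - F u) <= RInt H u v.
Proof.
  intros Huv HF Hd Hc.
  assert (A1 : RInt H u u - F u <= RInt H u v - F v).
  { apply (incr_deriv (fun t => RInt H u t - F t) (fun t => H t - dF t)); auto.
    intros x Hx. apply derivable_pt_lim_minus. apply deriv_prim; auto. apply HF; auto.
    intros x Hx. specialize (Hd x Hx). apply Rabs_le_between in Hd. lra. }
  assert (A2 : RInt H u u + F u <= RInt H u v + F v).
  { apply (incr_deriv (fun t => RInt H u t + F t) (fun t => H t + dF t)); auto.
    intros x Hx. apply derivable_pt_lim_plus. apply deriv_prim; auto. apply HF; auto.
    intros x Hx. specialize (Hd x Hx). apply Rabs_le_between in Hd. lra. }
  rewrite RInt_pointR in A1, A2. apply Rabs_le; lra.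
Qed.

Lemma kint th e b : 0 < e <= b ->
  RInt (fun t => th * rpow t (th - 1)) e b = rpow b th - rpow e th.
Proof.
  intros He. apply (FTC (fun t => rpow t th)). lra.
  intros x Hx. apply deriv_rpow. lra.
  intros x Hx. apply continuity_pt_mult. apply continuity_pt_const; intros ? ?; auto.
  apply continuity_rpow_pos; lra.
Qed.

Lemma cpt_const c x : continuity_pt (fun _ => c) x.
Proof. apply continuity_pt_const; intros ? ?; auto. Qed.

Ltac rring := match goal with |- @eq _ ?a ?b => change (@eq R a b) end; ring.

Lemma aux_eq1 (x y : R) : x = y + x - y.
Proof. ring. Qed.

Lemma core_bound th lam F dF H e :
  0 < th -> 0 <= lam <= 1 -> 0 < e < 1 ->
  (forall t, 0 <= t <= 1 -> derivable_pt_lim F t (dF t)) ->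
  (forall t, 0 <= t <= 1 -> Rabs (dF t) <= H t) ->
  (forall x, continuity_pt H x) ->
  Rabs ((rpow 1 th - lam) * F 1 - (rpow e th - lam) * F e
        - th * RInt (fun t => rpow t (th - 1) * F t) e 1)
  <= RInt (fun t => Rabs (rpow t th - lam) * H t) 0 1.
Proof.
  intros Hth Hl He HF Hd Hc.
  set (k := fun t => rpow t th - lam).
  set (kd := fun t => th * rpow t (th - 1)).
  set (G := fun t => RInt H 0 t).
  set (t0 := rpow lam (/ th)).
  assert (Ht0 : 0 <= t0 <= 1).
  { split. apply rpow_ge0. unfold t0. rewrite <- (rpow_1 (/ th)).
    apply rpow_le_l. left; apply Rinv_0_lt_compat; auto. lra. }
  assert (Et0 : rpow t0 th = lam) by (unfold t0; apply rpow_inv_pow; lra).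
  assert (Hkt0 : k t0 = 0) by (unfold k; lra).
  assert (Hkneg : forall t, 0 <= t <= t0 -> k t <= 0).
  { intros t Ht. unfold k. rewrite <- Et0.
    assert (rpow t th <= rpow t0 th) by (apply rpow_le_l; lra). lra. }
  assert (Hkpos : forall t, t0 <= t -> 0 <= k t).
  { intros t Ht. unfold k. rewrite <- Et0.
    assert (rpow t0 th <= rpow t th) by (apply rpow_le_l; lra). lra. }
  set (p := Rmax t0 e).
  assert (Hp : e <= p <= 1).
  { unfold p. split. apply Rmax_r. apply Rmax_lub; lra. }
  assert (Hkp : 0 <= k p) by (apply Hkpos; unfold p; apply Rmax_l).
  assert (HkG : k p * (G p - G e) = 0).
  { unfold p, Rmax. destruct (Rle_dec t0 e). rring. rewrite Hkt0; rring. }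
  assert (cF : forall x, 0 <= x <= 1 -> continuity_pt F x).
  { intros x Hx. apply derivable_continuous_pt. exists (dF x). apply HF; auto. }
  assert (cG : forall x, continuity_pt G x).
  { intros x. apply derivable_continuous_pt. exists (H x). apply deriv_prim; auto. }
  assert (ck : forall x, continuity_pt k x).
  { intros x. unfold k. apply continuity_pt_minus. apply continuity_rpow; lra. apply cpt_const. }
  assert (ckd : forall x, 0 < x -> continuity_pt kd x).
  { intros x Hx. unfold kd. apply continuity_pt_mult. apply cpt_const. apply continuity_rpow_pos; auto. }
  assert (dk : forall x, 0 < x -> derivable_pt_lim k x (kd x)).
  { intros x Hx. unfold k, kd. replace (th * rpow x (th - 1)) with (th * rpow x (th - 1) - 0) by rring.
    apply derivable_pt_lim_minus. apply deriv_rpow; auto. apply derivable_pt_lim_const. }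
  assert (Hpos : forall x, 0 <= x <= 1 -> 0 <= H x).
  { intros x Hx. specialize (Hd x Hx). pose proof (Rabs_pos (dF x)). lra. }
  assert (kdpos : forall x, 0 < x -> 0 <= kd x).
  { intros x Hx. unfold kd. pose proof (rpow_ge0 x (th - 1)). nra. }
  assert (GH : forall u v, RInt H u v = G v - G u).
  { intros u v. unfold G. rewrite <- (RInt_ChaslesR H 0 u v). apply aux_eq1.
    apply (ex_RInt_continuous (V := R_CompleteNormedModule)); intros; apply cpt_cont; auto.
    apply (ex_RInt_continuous (V := R_CompleteNormedModule)); intros; apply cpt_cont; auto. }
  assert (lip : forall u v, 0 <= u <= v -> v <= 1 -> Rabs (F v - F u) <= G v - G u).
  { intros u v Huv Hv. rewrite <- GH. apply (lip_bound F dF); auto; try lra.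
    intros; apply HF; lra. intros; apply Hd; lra. }
  assert (exi : forall f a b, a <= b -> (forall x, a <= x <= b -> continuity_pt f x) -> ex_RInt f a b).
  { intros f a b Hab Hf. apply ex_RInt_cont; auto. }
  set (I := fun a b => RInt (fun t => kd t * F t) a b).
  assert (HJ : th * RInt (fun t => rpow t (th - 1) * F t) e 1 = I e p + I p 1).
  { unfold I. rewrite (RInt_ChaslesR _ e p 1).
    rewrite <- RInt_scalR. apply RInt_extR. intros; unfold kd; rring.
    apply exi. lra. intros x Hx. apply continuity_pt_mult. apply continuity_rpow_pos; lra. apply cF; lra.
    apply exi. lra. intros x Hx. apply continuity_pt_mult. apply ckd; lra. apply cF; lra.
    apply exi. lra. intros x Hx. apply continuity_pt_mult. apply ckd; lra. apply cF; lra. }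
  set (X1 := RInt (fun t => kd t * (F 1 - F t)) p 1).
  set (X2 := RInt (fun t => kd t * (F e - F t)) e p).
  assert (HX1 : X1 = F 1 * (k 1 - k p) - I p 1).
  { unfold X1, I. rewrite (RInt_extR (fun t => kd t * (F 1 - F t)) (fun t => F 1 * kd t - kd t * F t)); [|intros; rring].
    rewrite RInt_minusR, RInt_scalR. unfold kd at 1. rewrite kint by lra. unfold k; rring.
    apply exi. lra. intros x Hx. apply ckd; lra.
    apply exi. lra. intros x Hx. apply continuity_pt_mult. apply cpt_const. apply ckd; lra.
    apply exi. lra. intros x Hx. apply continuity_pt_mult. apply ckd; lra. apply cF; lra. }
  assert (HX2 : X2 = F e * (k p - k e) - I e p).
  { unfold X2, I. rewrite (RInt_extR (fun t => kd t * (F e - F t)) (fun t => F e * kd t - kd t * F t)); [|intros; rring].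
    rewrite RInt_minusR, RInt_scalR. unfold kd at 1. rewrite kint by lra. unfold k; rring.
    apply exi. lra. intros x Hx. apply ckd; lra.
    apply exi. lra. intros x Hx. apply continuity_pt_mult. apply cpt_const. apply ckd; lra.
    apply exi. lra. intros x Hx. apply continuity_pt_mult. apply ckd; lra. apply cF; lra. }
  replace ((rpow 1 th - lam) * F 1 - (rpow e th - lam) * F e
        - th * RInt (fun t => rpow t (th - 1) * F t) e 1)
    with (k p * (F 1 - F e) + X1 + X2) by (rewrite HX1, HX2, HJ; unfold k; rring).
  set (Y1 := RInt (fun t => kd t * (G 1 - G t)) p 1).
  set (Y2 := RInt (fun t => kd t * (G t - G e)) e p).
  assert (BX1 : Rabs X1 <= Y1).
  { unfold X1, Y1. eapply Rle_trans. apply abs_RInt_le. lra.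
    apply exi. lra. intros x Hx. apply continuity_pt_mult. apply ckd; lra.
    apply continuity_pt_minus. apply cpt_const. apply cF; lra.
    apply RInt_le. lra.
    apply ex_RInt_norm. apply exi. lra. intros x Hx. apply continuity_pt_mult. apply ckd; lra.
    apply continuity_pt_minus. apply cpt_const. apply cF; lra.
    apply exi. lra. intros x Hx. apply continuity_pt_mult. apply ckd; lra.
    apply continuity_pt_minus. apply cpt_const. apply cG.
    intros x Hx. rewrite Rabs_mult, (Rabs_right (kd x)) by (apply Rle_ge, kdpos; lra).
    apply Rmult_le_compat_l. apply kdpos; lra. apply lip; lra. }
  assert (BX2 : Rabs X2 <= Y2).
  { unfold X2, Y2. eapply Rle_trans. apply abs_RInt_le. lra.
    apply exi. lra. intros x Hx. apply continuity_pt_mult. apply ckd; lra.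
    apply continuity_pt_minus. apply cpt_const. apply cF; lra.
    apply RInt_le. lra.
    apply ex_RInt_norm. apply exi. lra. intros x Hx. apply continuity_pt_mult. apply ckd; lra.
    apply continuity_pt_minus. apply cpt_const. apply cF; lra.
    apply exi. lra. intros x Hx. apply continuity_pt_mult. apply ckd; lra.
    apply continuity_pt_minus. apply cG. apply cpt_const.
    intros x Hx. rewrite Rabs_mult, (Rabs_right (kd x)) by (apply Rle_ge, kdpos; lra).
    apply Rmult_le_compat_l. apply kdpos; lra. rewrite Rabs_minus_sym. apply lip; lra. }
  assert (HY1 : Y1 = - k p * (G 1 - G p) + RInt (fun t => k t * H t) p 1).
  { unfold Y1. rewrite (IBP k kd (fun t => G 1 - G t) (fun t => 0 - H t)); try lra.
    rewrite (RInt_extR (fun t => k t * (0 - H t)) (fun t => -1 * (k t * H t))); [|intros; rring].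
    rewrite RInt_scalR. rring.
    apply exi. lra. intros x Hx. apply continuity_pt_mult; auto.
    intros x Hx. apply dk; lra.
    intros x Hx. apply derivable_pt_lim_minus. apply derivable_pt_lim_const. apply deriv_prim; auto.
    intros x Hx. apply ckd; lra.
    intros x Hx. apply continuity_pt_minus. apply cpt_const. auto. }
  assert (HY2 : Y2 = k p * (G p - G e) - RInt (fun t => k t * H t) e p).
  { unfold Y2. rewrite (IBP k kd (fun t => G t - G e) (fun t => H t - 0)); try lra.
    rewrite (RInt_extR (fun t => k t * (H t - 0)) (fun t => k t * H t)); [|intros; rring].
    rring.
    intros x Hx. apply dk; lra.
    intros x Hx. apply derivable_pt_lim_minus. apply deriv_prim; auto. apply derivable_pt_lim_const.
    intros x Hx. apply ckd; lra.
    intros x Hx. apply continuity_pt_minus. auto. apply cpt_const. }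
  assert (HF1 : Rabs (F 1 - F e) <= G 1 - G e) by (apply lip; lra).
  set (w := fun t => Rabs (k t) * H t).
  assert (cw : forall x, continuity_pt w x).
  { intros x. unfold w. apply continuity_pt_mult; auto.
    apply continuity_pt_comp with (f2 := Rabs); auto. apply Rcontinuity_abs. }
  assert (W1 : RInt (fun t => k t * H t) p 1 = RInt w p 1).
  { apply RInt_extR. intros x Hx. rewrite Rmin_left, Rmax_right in Hx by lra.
    unfold w. rewrite Rabs_right; auto. apply Rle_ge, Hkpos. unfold p in Hx.
    pose proof (Rmax_l t0 e); lra. }
  assert (W2 : - RInt (fun t => k t * H t) e p = RInt w e p).
  { transitivity (-1 * RInt (fun t => k t * H t) e p). rring.
    rewrite <- RInt_scalR by (apply exi; [lra|intros; apply continuity_pt_mult; auto]).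
    apply RInt_extR. intros x Hx. rewrite Rmin_left, Rmax_right in Hx by lra.
    unfold w. rewrite Rabs_left1. rring. apply Hkneg. split. lra.
    unfold p, Rmax in Hx. destruct (Rle_dec t0 e); lra. }
  assert (W3 : RInt w 0 e + RInt w e p + RInt w p 1 = RInt w 0 1).
  { rewrite (RInt_ChaslesR w 0 e p), (RInt_ChaslesR w 0 p 1); auto;
    apply exi; try lra; auto. }
  assert (W0 : 0 <= RInt w 0 e).
  { apply RInt_ge_0. lra. apply exi; auto; lra.
    intros x Hx. unfold w. apply Rmult_le_pos. apply Rabs_pos. apply Hpos; lra. }
  fold w.
  assert (Rabs (k p * (F 1 - F e)) <= k p * (G 1 - G e)).
  { rewrite Rabs_mult, Rabs_right by lra. apply Rmult_le_compat_l; auto. }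
  eapply Rle_trans. apply Rabs_triang. eapply Rle_trans. apply Rplus_le_compat_r. apply Rabs_triang.
  change (RInt (fun t => Rabs (rpow t th - lam) * H t) 0 1) with (RInt w 0 1).
  rewrite <- W3, <- W2, <- W1. rewrite HY1, HY2 in *. lra.
Qed.

Lemma core th lam F dF H :
  0 < th -> 0 <= lam <= 1 ->
  (forall t, 0 <= t <= 1 -> derivable_pt_lim F t (dF t)) ->
  (forall t, 0 <= t <= 1 -> Rabs (dF t) <= H t) ->
  (forall x, continuity_pt H x) ->
  exists L, lim0 (fun e => th * RInt (fun t => rpow t (th - 1) * F t) e 1) L /\
   Rabs ((1 - lam) * F 1 + lam * F 0 - L) <= RInt (fun t => Rabs (rpow t th - lam) * H t) 0 1.
Proof.
  intros Hth Hl HF Hd Hc.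
  assert (cF : forall x, 0 <= x <= 1 -> continuity_pt F x).
  { intros x Hx. apply derivable_continuous_pt. exists (dF x). apply HF; auto. }
  assert (Hpos : forall x, 0 <= x <= 1 -> 0 <= H x).
  { intros x Hx. specialize (Hd x Hx). pose proof (Rabs_pos (dF x)). lra. }
  assert (exH : forall a b, ex_RInt H a b).
  { intros. apply (ex_RInt_continuous (V := R_CompleteNormedModule)); intros; apply cpt_cont; auto. }
  set (M := Rabs (F 0) + RInt H 0 1).
  assert (HM : forall t, 0 <= t <= 1 -> Rabs (F t) <= M).
  { intros t Ht. assert (Rabs (F t - F 0) <= RInt H 0 t).
    { apply (lip_bound F dF); try lra. intros; apply HF; lra. intros; apply Hd; lra. auto. }
    assert (0 <= RInt H t 1) by (apply RInt_ge_0; [lra|auto|intros; apply Hpos; lra]).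
    assert (Rabs (F t) <= Rabs (F 0) + Rabs (F t - F 0)).
    { replace (F t) with (F 0 + (F t - F 0)) at 1 by ring. apply Rabs_triang. }
    unfold M. rewrite <- (RInt_ChaslesR H 0 t 1) by auto. lra. }
  assert (exi : forall f a b, a <= b -> (forall x, a <= x <= b -> continuity_pt f x) -> ex_RInt f a b).
  { intros f a b Hab Hf. apply ex_RInt_cont; auto. }
  set (g := fun e => th * RInt (fun t => rpow t (th - 1) * (F t + M)) e 1).
  assert (cg : forall a b, 0 < a -> a <= b -> b <= 1 -> ex_RInt (fun t => rpow t (th - 1) * (F t + M)) a b).
  { intros a b Ha Hab Hb. apply exi; auto. intros x Hx. apply continuity_pt_mult.
    apply continuity_rpow_pos; lra. apply continuity_pt_plus. apply cF; lra. apply cpt_const. }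
  assert (Hpos2 : forall t, 0 < t <= 1 -> 0 <= rpow t (th - 1) * (F t + M)).
  { intros t Ht. apply Rmult_le_pos. apply rpow_ge0. specialize (HM t). 
    assert (Rabs (F t) <= M) by (apply HM; lra). apply Rabs_le_between in H0. lra. }
  destruct (mono0 g 1 (2 * M)) as [l Hlim]. lra.
  { intros h1 h2 Hh Hh2. unfold g. rewrite <- (RInt_ChaslesR _ h1 h2 1) by (apply cg; lra).
    assert (0 <= RInt (fun t => rpow t (th - 1) * (F t + M)) h1 h2).
    { apply RInt_ge_0. lra. apply cg; lra. intros; apply Hpos2; lra. }
    nra. }
  { intros h Hh. unfold g.
    assert (RInt (fun t => rpow t (th - 1) * (F t + M)) h 1 <= RInt (fun t => (2 * M / th) * (th * rpow t (th - 1))) h 1).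
    { apply RInt_le. lra. apply cg; lra.
      apply exi. lra. intros x Hx. apply continuity_pt_mult. apply cpt_const.
      apply continuity_pt_mult. apply cpt_const. apply continuity_rpow_pos; lra.
      intros x Hx. replace (2 * M / th * (th * rpow x (th - 1))) with (rpow x (th - 1) * (2 * M)) by (field; lra).
      apply Rmult_le_compat_l. apply rpow_ge0. assert (Rabs (F x) <= M) by (apply HM; lra).
      apply Rabs_le_between in H0. lra. }
    rewrite RInt_scalR, kint in H0 by (lra || (apply exi; [lra|intros x Hx; apply continuity_pt_mult; [apply cpt_const|apply continuity_rpow_pos; lra]])).
    rewrite rpow_1 in H0. pose proof (rpow_ge0 h th).
    assert (0 <= M) by (unfold M; pose proof (Rabs_pos (F 0)); pose proof (RInt_ge_0 H 0 1); assert (0 <= RInt H 0 1) by (apply RInt_ge_0; [lra|auto|intros; apply Hpos; lra]); lra).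
    apply Rmult_le_compat_l with (r := th) in H0; [|lra].
    replace (th * (2 * M / th * (1 - rpow h th))) with (2 * M * (1 - rpow h th)) in H0 by (field; lra).
    nra. }
  set (f := fun e => th * RInt (fun t => rpow t (th - 1) * F t) e 1).
  assert (Hfg : forall e, 0 < e < 1 -> f e = g e + -1 * (M * (1 - rpow e th))).
  { intros e He. unfold f, g.
    rewrite (RInt_extR (fun t => rpow t (th - 1) * (F t + M)) (fun t => rpow t (th - 1) * F t + (M / th) * (th * rpow t (th - 1)))); [|intros; field; lra].
    rewrite RInt_plusR, RInt_scalR, kint, rpow_1. field. lra. lra.
    apply exi. lra. intros x Hx. apply continuity_pt_mult. apply cpt_const. apply continuity_rpow_pos; lra.
    apply exi. lra. intros x Hx. apply continuity_pt_mult. apply continuity_rpow_pos; lra. apply cF; lra.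
    apply exi. lra. intros x Hx. apply continuity_pt_mult. apply cpt_const.
    apply continuity_pt_mult. apply cpt_const. apply continuity_rpow_pos; lra. }
  assert (Hlf : lim0 f (l + -1 * M)).
  { apply (lim0_ext (fun e => g e + -1 * (M * (1 - rpow e th)))) with 1. lra.
    intros; rewrite Hfg; auto.
    apply lim0_plus; auto. apply lim0_scal.
    assert (Hc0 : lim0 (fun e => M * (1 - rpow e th)) (M * (1 - rpow 0 th))).
    { apply (lim0_cont (fun e => M * (1 - rpow e th))).
      apply continuity_pt_mult. apply cpt_const. apply continuity_pt_minus. apply cpt_const.
      apply continuity_rpow; lra. }
    rewrite rpow_0_l in Hc0 by lra. rewrite Rminus_0_r, Rmult_1_r in Hc0. exact Hc0. }
  exists (l + -1 * M). split; auto.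
  set (T := fun e => (rpow 1 th - lam) * F 1 - (rpow e th - lam) * F e - f e).
  assert (HT : lim0 T ((rpow 1 th - lam) * F 1 + -1 * ((rpow 0 th - lam) * F 0) + -1 * (l + -1 * M))).
  { apply (lim0_ext (fun e => (rpow 1 th - lam) * F 1 + -1 * ((rpow e th - lam) * F e) + -1 * f e)) with 1. lra.
    intros; unfold T; ring.
    apply lim0_plus. apply lim0_plus. apply lim0_const. apply lim0_scal.
    apply (lim0_cont (fun e => (rpow e th - lam) * F e)).
    apply continuity_pt_mult. apply continuity_pt_minus. apply continuity_rpow; lra. apply cpt_const.
    apply cF; lra.
    apply lim0_scal; auto. }
  rewrite rpow_1, rpow_0_l in HT by lra.
  replace ((1 - lam) * F 1 + lam * F 0 - (l + -1 * M)) with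
    ((1 - lam) * F 1 + -1 * ((0 - lam) * F 0) + -1 * (l + -1 * M)) by ring.
  apply (lim0_abs_le T _ _ 1). lra. auto.
  intros h Hh. unfold T, f. apply core_bound with dF; auto.
Qed.

Lemma limi_plus g1 g2 l1 l2 : limi g1 l1 -> limi g2 l2 -> limi (fun h => g1 h + g2 h) (l1 + l2).
Proof.
  intros H1 H2 eps Heps.
  destruct (H1 (eps/2)) as [d1 P1]; [lra|].
  destruct (H2 (eps/2)) as [d2 P2]; [lra|].
  exists (Rmax d1 d2). intros h Hh.
  assert (Rmax d1 d2 >= d1) by (apply Rle_ge, Rmax_l). assert (Rmax d1 d2 >= d2) by (apply Rle_ge, Rmax_r).
  specialize (P1 h). specialize (P2 h).
  replace (g1 h + g2 h - (l1 + l2)) with ((g1 h - l1) + (g2 h - l2)) by ring.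
  eapply Rle_lt_trans. apply Rabs_triang.
  assert (Rabs (g1 h - l1) < eps/2) by (apply P1; lra).
  assert (Rabs (g2 h - l2) < eps/2) by (apply P2; lra). lra.
Qed.

Lemma limi_scal c g l : limi g l -> limi (fun h => c * g h) (c * l).
Proof.
  intros H eps Heps.
  destruct (H (eps / (Rabs c + 1))) as [d P].
  { apply Rdiv_lt_0_compat; auto. pose proof (Rabs_pos c); lra. }
  exists d. intros h Hh.
  replace (c * g h - c * l) with (c * (g h - l)) by ring. rewrite Rabs_mult.
  pose proof (Rabs_pos c). specialize (P h Hh).
  apply Rle_lt_trans with ((Rabs c + 1) * Rabs (g h - l)).
  apply Rmult_le_compat_r. apply Rabs_pos. lra.
  apply Rmult_lt_reg_l with (/ (Rabs c + 1)). apply Rinv_0_lt_compat; lra.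
  rewrite <- Rmult_assoc, Rinv_l by lra. unfold Rdiv in P. lra.
Qed.

Lemma limi_ge g l N B : limi g l -> (forall y, N < y -> B <= g y) -> B <= l.
Proof.
  intros H Hb. assert (-1 * l <= - B); [|lra].
  apply (limi_le (fun y => -1 * g y) (-1 * l) N).
  apply limi_scal; auto.
  intros y Hy. specialize (Hb y Hy). lra.
Qed.

Lemma limi_squeeze g K : (forall y, 1 < y -> 0 <= g y <= K / y) -> limi g 0.
Proof.
  intros Hg eps Heps. exists (Rmax 1 (Rabs K / eps)). intros y Hy.
  assert (1 <= Rmax 1 (Rabs K / eps)) by apply Rmax_l.
  assert (Rabs K / eps <= Rmax 1 (Rabs K / eps)) by apply Rmax_r.
  specialize (Hg y ltac:(lra)). rewrite Rminus_0_r, Rabs_right by lra.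
  apply Rle_lt_trans with (K / y). lra.
  apply Rle_lt_trans with (Rabs K / y). unfold Rdiv; apply Rmult_le_compat_r.
  left; apply Rinv_0_lt_compat; lra. apply Rle_abs.
  apply Rmult_lt_reg_r with y. lra. unfold Rdiv. rewrite Rmult_assoc, Rinv_l, Rmult_1_r by lra.
  apply Rmult_lt_reg_r with (/ eps). apply Rinv_0_lt_compat; lra.
  replace (eps * y * / eps) with y by (field; lra). unfold Rdiv in *. lra.
Qed.

Lemma exp_bound t k : 0 < t -> 0 < k -> exp (- t) <= Rpower k k * Rpower t (- k).
Proof.
  intros Ht Hk.
  assert (E1 : Rpower (t / k) k <= Rpower (exp (t / k)) k).
  { apply Rle_Rpower_l. lra. split. apply Rdiv_lt_0_compat; auto.
    pose proof (exp_ineq1 (t / k)). assert (0 < t / k) by (apply Rdiv_lt_0_compat; auto).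
    destruct (Req_dec (t/k) 0). lra. specialize (H H1). lra. }
  unfold Rpower at 2 in E1. rewrite ln_exp in E1. replace (k * (t / k)) with t in E1 by (field; lra).
  unfold Rdiv in E1. rewrite <- Rpower_mult_distr in E1 by (auto; apply Rinv_0_lt_compat; auto).
  rewrite exp_Ropp.
  assert (Hp : 0 < Rpower t k * Rpower (/ k) k) by (apply Rmult_lt_0_compat; apply Rpower_pos).
  apply Rle_trans with (/ (Rpower t k * Rpower (/ k) k)).
  apply Rinv_le_contravar; auto.
  rewrite Rinv_mult. unfold Rpower. rewrite <- !exp_Ropp. rewrite ln_Rinv by auto.
  replace (- (k * - ln k)) with (k * ln k) by ring. rewrite Rmult_comm.
  replace (- k * ln t) with (- (k * ln t)) by ring. right; reflexivity.
Qed.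


Lemma dexpm x : derivable_pt_lim (fun t => exp (- t)) x (- exp (- x)).
Proof.
  replace (- exp (- x)) with (exp (- x) * (-1)) by ring.
  apply (derivable_pt_lim_comp (fun t => - t) exp).
  replace (-1) with (- (1)) by ring.
  apply (derivable_pt_lim_opp (fun t => t)). apply derivable_pt_lim_id.
  apply derivable_pt_lim_exp.
Qed.

Lemma cexpm x : continuity_pt (fun t => exp (- t)) x.
Proof. apply derivable_continuous_pt. exists (- exp (- x)). apply dexpm. Qed.

Definition wG th t := rpow t (th - 1) * exp (- t).

Lemma cwG th x : 0 < x -> continuity_pt (wG th) x.
Proof. intros. unfold wG. apply continuity_pt_mult. apply continuity_rpow_pos; auto. apply cexpm. Qed.

Lemma wG_pos th x : 0 < x -> 0 < wG th x.
Proof. intros. unfold wG. apply Rmult_lt_0_compat. apply rpow_gt0; auto. apply exp_pos. Qed.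

Lemma exwG th a b : 0 < a -> 0 < b -> ex_RInt (wG th) a b.
Proof.
  intros Ha Hb. destruct (Rle_dec a b).
  apply ex_RInt_cont; auto. intros x Hx; apply cwG; lra.
  apply ex_RInt_swap. apply ex_RInt_cont; [lra|]. intros x Hx; apply cwG; lra.
Qed.

Lemma wG_bound th t : 0 < th -> 0 < t ->
  wG th t <= Rpower (th + 1) (th + 1) * Rpower t (-2).
Proof.
  intros Hth Ht. unfold wG. rewrite rpow_pos by auto.
  pose proof (exp_bound t (th + 1) Ht ltac:(lra)).
  apply Rle_trans with (Rpower t (th - 1) * (Rpower (th + 1) (th + 1) * Rpower t (- (th + 1)))).
  apply Rmult_le_compat_l; auto. left; apply Rpower_pos.
  right. rewrite Rmult_comm, Rmult_assoc, <- Rpower_plus. f_equal. f_equal. ring.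
Qed.

Lemma int_tm2 N : 1 <= N -> RInt (fun t => Rpower t (-2)) 1 N = 1 - Rpower N (-1).
Proof.
  intros HN. rewrite (RInt_extR _ (fun t => (-1) * ((-1) * rpow t (-1 - 1)))).
  rewrite RInt_scalR. rewrite (FTC (fun t => rpow t (-1))). rewrite (rpow_pos N) by lra.
  rewrite rpow_1. rring. lra.
  intros x Hx. apply deriv_rpow; lra.
  intros x Hx. apply continuity_pt_mult. apply cpt_const. apply continuity_rpow_pos; lra.
  apply ex_RInt_cont. lra. intros x Hx. apply continuity_pt_mult. apply cpt_const. apply continuity_rpow_pos; lra.
  intros x Hx. rewrite Rmin_left, Rmax_right in Hx by lra. rewrite rpow_pos by lra.
  replace (-1 - 1) with (-2) by ring. ring.
Qed.

Lemma gamma_parts th : 0 < th ->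
  exists j1 i1, lim0 (fun h => RInt (wG th) h 1) j1 /\ limi (fun N => RInt (wG th) 1 N) i1 /\
     0 <= j1 /\ 0 < i1.
Proof.
  intros Hth.
  set (K := Rpower (th + 1) (th + 1)).
  destruct (mono0 (fun h => RInt (wG th) h 1) 1 (/ th)) as [j1 Hj1]. lra.
  { intros h1 h2 Hh Hh2. rewrite <- (RInt_ChaslesR _ h1 h2 1) by (apply exwG; lra).
    assert (0 <= RInt (wG th) h1 h2).
    { apply RInt_ge_0. lra. apply exwG; lra. intros; left; apply wG_pos; lra. }
    lra. }
  { intros h Hh.
    apply Rle_trans with (RInt (fun t => / th * (th * rpow t (th - 1))) h 1).
    apply RInt_le. lra. apply exwG; lra.
    apply ex_RInt_cont. lra. intros x Hx. apply continuity_pt_mult. apply cpt_const.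
    apply continuity_pt_mult. apply cpt_const. apply continuity_rpow_pos; lra.
    intros x Hx. unfold wG. replace (/ th * (th * rpow x (th - 1))) with (rpow x (th - 1) * 1) by (field; lra).
    apply Rmult_le_compat_l. apply rpow_ge0. rewrite <- exp_0. left. apply exp_increasing. lra.
    rewrite RInt_scalR. rewrite kint, rpow_1 by lra.
    pose proof (rpow_ge0 h th). assert (0 < / th) by (apply Rinv_0_lt_compat; lra). nra.
    apply ex_RInt_cont. lra. intros x Hx. apply continuity_pt_mult. apply cpt_const. apply continuity_rpow_pos; lra. }
  destruct (monoi (fun N => RInt (wG th) 1 N) 1 K) as [i1 Hi1].
  { intros y1 y2 Hy. rewrite <- (RInt_ChaslesR _ 1 y1 y2) by (apply exwG; lra).
    assert (0 <= RInt (wG th) y1 y2).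
    { apply RInt_ge_0. lra. apply exwG; lra. intros; left; apply wG_pos; lra. }
    lra. }
  { intros y Hy.
    apply Rle_trans with (RInt (fun t => K * Rpower t (-2)) 1 y).
    apply RInt_le. lra. apply exwG; lra.
    apply ex_RInt_cont. lra. intros x Hx. apply continuity_pt_mult. apply cpt_const.
    apply (continuity_pt_locally_ext (fun t => rpow t (-2))) with (a := x). lra.
    intros z Hz. unfold Rdist in Hz. apply Rabs_def2 in Hz. apply rpow_pos; lra.
    apply continuity_rpow_pos; lra.
    intros x Hx. apply wG_bound; lra.
    rewrite RInt_scalR. rewrite int_tm2 by lra. unfold K. pose proof (Rpower_pos y (-1)).
    pose proof (Rpower_pos (th + 1) (th + 1)). nra.
    apply ex_RInt_cont. lra. intros x Hx.
    apply (continuity_pt_locally_ext (fun t => rpow t (-2))) with (a := x). lra.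
    intros z Hz. unfold Rdist in Hz. apply Rabs_def2 in Hz. apply rpow_pos; lra.
    apply continuity_rpow_pos; lra. }
  exists j1, i1. split; auto. split; auto. split.
  - assert (-1 * j1 <= 0); [|lra].
    apply (lim0_le (fun h => -1 * RInt (wG th) h 1) (-1 * j1) 1). lra. apply lim0_scal; auto.
    intros h Hh. assert (0 <= RInt (wG th) h 1); [|lra].
    apply RInt_ge_0. lra. apply exwG; lra. intros; left; apply wG_pos; lra.
  - apply Rlt_le_trans with (RInt (wG th) 1 2).
    apply RInt_gt_0. lra. intros; apply wG_pos; lra. intros x Hx; apply cpt_cont, cwG; lra.
    apply (limi_ge (fun N => RInt (wG th) 1 N) _ 2); auto. intros y Hy.
    rewrite <- (RInt_ChaslesR _ 1 2 y) by (apply exwG; lra).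
    assert (0 <= RInt (wG th) 2 y).
    { apply RInt_ge_0. lra. apply exwG; lra. intros; left; apply wG_pos; lra. }
    lra.
Qed.

Lemma limi_const c : limi (fun _ => c) c.
Proof. intros eps Heps; exists 0; intros; rewrite Rminus_diag, Rabs_R0; auto. Qed.

Lemma Gamma_rec th : 0 < th -> Gamma (th + 1) = th * Gamma th /\ 0 < Gamma th.
Proof.
  intros Hth. destruct (gamma_parts th Hth) as [j1 [i1 [Hj [Hi [Hj0 Hi0]]]]].
  assert (HG : Gamma th = j1 + i1).
  { unfold Gamma. apply lim_pinf_eq.
    apply (limi_ext (fun N => j1 + RInt (wG th) 1 N)) with 1.
    intros N HN. symmetry. apply lim0p_eq.
    apply (lim0_ext (fun h => RInt (wG th) h 1 + RInt (wG th) 1 N)) with 1. lra.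
    intros h Hh. rewrite Rint_RInt by (apply exwG; lra). fold (wG th).
    apply RInt_ChaslesR; apply exwG; lra.
    apply lim0_plus; auto. apply lim0_const.
    apply limi_plus; auto. apply limi_const. }
  split; [|lra]. rewrite HG.
  unfold Gamma. replace (th + 1 - 1) with th by ring. apply lim_pinf_eq.
  set (u := fun N => rpow N th * exp (- N)).
  assert (cu : forall x, continuity_pt u x).
  { intros x. unfold u. apply continuity_pt_mult. apply continuity_rpow; lra. apply cexpm. }
  apply (limi_ext (fun N => -1 * u N + th * (j1 + RInt (wG th) 1 N))) with 1.
  { intros N HN. symmetry. apply lim0p_eq.
    apply (lim0_ext (fun h => u h + -1 * u N + th * (RInt (wG th) h 1 + RInt (wG th) 1 N))) with 1. lra.
    intros h Hh. rewrite Rint_RInt.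
    2:{ apply ex_RInt_cont. lra. intros x Hx. apply continuity_pt_mult. apply continuity_rpow; lra. apply cexpm. }
    rewrite (RInt_ChaslesR (wG th) h 1 N) by (apply exwG; lra).
    rewrite (RInt_extR (fun t => rpow t th * exp (- t)) (fun t => exp (- t) * rpow t th)); [|intros; ring].
    rewrite (IBP (fun t => - exp (- t)) (fun t => exp (- t)) (fun t => rpow t th) (fun t => th * rpow t (th - 1))).
    rewrite (RInt_extR (fun t => - exp (- t) * (th * rpow t (th - 1))) (fun t => -1 * (th * wG th t))); [|intros; unfold wG; ring].
    rewrite RInt_scalR, RInt_scalR. unfold u. rring.
    apply exwG; lra.
    apply ex_RInt_cont. lra. intros x Hx. apply continuity_pt_mult. apply cpt_const. apply cwG; lra.
    lra.
    intros x Hx. replace (exp (- x)) with (- (- exp (- x))) by ring.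
    apply (derivable_pt_lim_opp (fun t => exp (- t))). apply dexpm.
    intros x Hx. apply deriv_rpow; lra.
    intros x Hx. apply cexpm.
    intros x Hx. apply continuity_pt_mult. apply cpt_const. apply continuity_rpow_pos; lra.
    replace (-1 * u N + th * (j1 + RInt (wG th) 1 N)) with (u 0 + -1 * u N + th * (j1 + RInt (wG th) 1 N)).
    apply lim0_plus. apply lim0_plus. apply lim0_cont; auto. apply lim0_const.
    apply lim0_scal. apply lim0_plus; auto. apply lim0_const.
    unfold u. rewrite rpow_0_l by lra. ring. }
  replace (th * (j1 + i1)) with (-1 * 0 + th * (j1 + i1)) by ring.
  apply limi_plus. apply limi_scal.
  apply (limi_squeeze u (Rpower (th + 1) (th + 1))).
  { intros y Hy. unfold u. split. apply Rmult_le_pos. apply rpow_ge0. left; apply exp_pos.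
    pose proof (wG_bound th y Hth ltac:(lra)). unfold wG in H.
    rewrite rpow_pos in * by lra.
    replace (Rpower y th) with (y * Rpower y (th - 1)).
    apply Rle_trans with (y * (Rpower (th + 1) (th + 1) * Rpower y (-2))).
    rewrite Rmult_assoc. apply Rmult_le_compat_l; lra.
    replace (-2) with (- (2)) by ring. rewrite Rpower_Ropp.
    replace (Rpower y 2) with (y * y). right; field; lra.
    replace 2 with (INR 2) by (simpl; ring). rewrite Rpower_pow by lra. simpl; ring.
    replace th with (1 + (th - 1)) at 2 by ring. rewrite Rpower_plus, Rpower_1 by lra. auto. }
  apply limi_scal. apply limi_plus. apply limi_const. auto.
Qed.

Lemma Rpower1l p : Rpower 1 p = 1.
Proof. unfold Rpower; rewrite ln_1, Rmult_0_r, exp_0; auto. Qed.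

Lemma bern z p : 0 <= z -> 0 < p <= 1 -> rpow z p <= 1 + p * (z - 1).
Proof.
  intros Hz Hp. destruct (Rle_lt_or_eq_dec _ _ Hz) as [Hz'| <-].
  2:{ rewrite rpow_0_l by lra. lra. }
  rewrite rpow_pos by auto.
  assert (D : forall c, 0 < c -> derivable_pt_lim (fun t => 1 + p * (t - 1) - Rpower t p) c (p - p * Rpower c (p - 1))).
  { intros c Hc. replace (p - p * Rpower c (p - 1)) with (0 + p * (1 - 0) - p * Rpower c (p - 1)) by ring.
    apply derivable_pt_lim_minus. apply derivable_pt_lim_plus. apply derivable_pt_lim_const.
    apply derivable_pt_lim_scal. apply derivable_pt_lim_minus. apply derivable_pt_lim_id. apply derivable_pt_lim_const.
    apply derivable_pt_lim_power; auto. }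
  destruct (Rle_dec z 1) as [Hz1|Hz1].
  - assert (1 + p * (1 - 1) - Rpower 1 p <= 1 + p * (z - 1) - Rpower z p); [|rewrite Rpower1l in *; lra].
    assert (- (1 + p * (z - 1) - Rpower z p) <= - (1 + p * (1 - 1) - Rpower 1 p)); [|lra].
    apply (incr_deriv (fun t => - (1 + p * (t - 1) - Rpower t p)) (fun c => - (p - p * Rpower c (p - 1)))); auto.
    intros x Hx. apply (derivable_pt_lim_opp (fun t => 1 + p * (t - 1) - Rpower t p)). apply D; lra.
    intros x Hx. assert (1 <= Rpower x (p - 1)).
    { unfold Rpower. rewrite <- exp_0 at 1. destruct (Req_dec x 1) as [->|Hx1]. rewrite ln_1, Rmult_0_r; lra.
      assert (ln x < 0) by (rewrite <- ln_1; apply ln_increasing; lra).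
      assert (0 <= (p - 1) * ln x) by nra.
      destruct (Rle_lt_or_eq_dec _ _ H0) as [H1|H1]. left; apply exp_increasing; auto. rewrite <- H1; lra. }
    nra.
  - assert (1 + p * (1 - 1) - Rpower 1 p <= 1 + p * (z - 1) - Rpower z p); [|rewrite Rpower1l in *; lra].
    apply (incr_deriv (fun t => 1 + p * (t - 1) - Rpower t p) (fun c => p - p * Rpower c (p - 1))); auto. lra.
    intros x Hx; apply D; lra.
    intros x Hx. assert (Rpower x (p - 1) <= 1).
    { unfold Rpower. rewrite <- exp_0 at 2. destruct (Req_dec x 1) as [->|Hx1]. rewrite ln_1, Rmult_0_r; lra.
      assert (0 < ln x) by (rewrite <- ln_1; apply ln_increasing; lra).
      destruct (Rle_lt_or_eq_dec _ _ (proj2 Hp)) as [Hp1| ->].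
      left. apply exp_increasing. nra. rewrite Rminus_diag, Rmult_0_l. lra. }
    nra.
Qed.

Lemma tangent y A p : 0 <= y -> 0 < A -> 0 < p <= 1 ->
  rpow y p <= rpow A p + p * rpow A (p - 1) * (y - A).
Proof.
  intros Hy HA Hp.
  pose proof (bern (y / A) p ltac:(apply Rmult_le_pos; [auto|left; apply Rinv_0_lt_compat; auto]) Hp).
  assert (E1 : rpow y p = rpow A p * rpow (y / A) p).
  { destruct (Rle_lt_or_eq_dec _ _ Hy) as [Hy'| <-].
    assert (0 < y / A) by (apply Rdiv_lt_0_compat; auto).
    rewrite !rpow_pos by auto. rewrite Rpower_mult_distr by auto. f_equal. field; lra.
    replace (0 / A) with 0 by (field; lra). rewrite !rpow_0_l by lra. ring. }
  assert (E2 : rpow A (p - 1) = rpow A p / A).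
  { rewrite !rpow_pos by auto. unfold Rminus. rewrite Rpower_plus.
    replace (-(1)) with (- (1)) by ring. rewrite Rpower_Ropp, Rpower_1 by auto. reflexivity. }
  rewrite E1, E2. assert (0 < rpow A p) by (apply rpow_gt0; auto).
  apply Rle_trans with (rpow A p * (1 + p * (y / A - 1))).
  apply Rmult_le_compat_l; lra. right. field. lra.
Qed.

Lemma holder q w v : 1 <= q ->
  (forall x, continuity_pt w x) -> (forall x, continuity_pt v x) ->
  (forall x, 0 <= x <= 1 -> 0 <= w x) -> (forall x, 0 <= x <= 1 -> 0 <= v x) ->
  0 < RInt w 0 1 ->
  RInt (fun t => w t * rpow (v t) (1 / q)) 0 1 <=
  rpow (RInt w 0 1) (1 - 1 / q) * rpow (RInt (fun t => w t * v t) 0 1) (1 / q).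
Proof.
  intros Hq cw cv Hw Hv HW.
  set (p := 1 / q). assert (Hp : 0 < p <= 1).
  { unfold p. split. apply Rdiv_lt_0_compat; lra. unfold Rdiv. rewrite Rmult_1_l.
    rewrite <- Rinv_1. apply Rinv_le_contravar; lra. }
  set (W := RInt w 0 1). set (V := RInt (fun t => w t * v t) 0 1).
  assert (HW' : 0 < W) by exact HW. clear HW. rename HW' into HW.
  assert (exi : forall f, (forall x, continuity_pt f x) -> ex_RInt f 0 1).
  { intros f Hf. apply ex_RInt_cont. lra. intros x _; apply Hf. }
  assert (cvp : forall x, continuity_pt (fun t => rpow (v t) p) x).
  { intros x. apply continuity_pt_comp with (f2 := fun s => rpow s p). auto. apply continuity_rpow; lra. }
  assert (HV : 0 <= V).
  { apply RInt_ge_0. lra. apply exi. intros; apply continuity_pt_mult; auto.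
    intros; apply Rmult_le_pos; [apply Hw|apply Hv]; lra. }
  set (X := RInt (fun t => w t * rpow (v t) p) 0 1).
  assert (Hbound : forall A, 0 < A -> X <= rpow A p * W + p * rpow A (p - 1) * (V - A * W)).
  { intros A HA. unfold X.
    apply Rle_trans with (RInt (fun t => rpow A p * w t + p * rpow A (p - 1) * (w t * v t - A * w t)) 0 1).
    apply RInt_le. lra. apply exi. intros; apply continuity_pt_mult; auto.
    apply exi. intros. apply continuity_pt_plus. apply continuity_pt_mult. apply cpt_const. auto.
    apply continuity_pt_mult. apply cpt_const. apply continuity_pt_minus. apply continuity_pt_mult; auto.
    apply continuity_pt_mult. apply cpt_const. auto.
    intros x Hx. pose proof (tangent (v x) A p ltac:(apply Hv; lra) HA Hp).
    assert (0 <= w x) by (apply Hw; lra). 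
    replace (rpow A p * w x + p * rpow A (p - 1) * (w x * v x - A * w x)) with
      (w x * (rpow A p + p * rpow A (p - 1) * (v x - A))) by ring.
    apply Rmult_le_compat_l; auto.
    rewrite (RInt_plusR (fun t => rpow A p * w t) (fun t => p * rpow A (p-1) * (w t * v t - A * w t))).
    rewrite (RInt_scalR w (rpow A p)), (RInt_scalR (fun t => w t * v t - A * w t) (p * rpow A (p-1))).
    rewrite (RInt_minusR (fun t => w t * v t) (fun t => A * w t)), (RInt_scalR w A).
    unfold W, V. apply Req_le. rring.
    all: try (apply exi; intros; repeat (apply continuity_pt_mult || apply continuity_pt_minus || apply cpt_const || auto)).
    all: try (apply ex_RInt_scal; apply exi; intros; repeat (apply continuity_pt_mult || apply continuity_pt_minus || apply cpt_const || auto)). }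
  unfold p in Hbound. fold X.
  destruct (Rle_lt_or_eq_dec _ _ HV) as [HV'| HV0].
  - specialize (Hbound (V / W) ltac:(apply Rdiv_lt_0_compat; auto)).
    assert (E0 : V - V / W * W = 0) by (field; lra).
    rewrite E0 in Hbound.
    rewrite Rmult_0_r, Rplus_0_r in Hbound. eapply Rle_trans. apply Hbound.
    right. rewrite !rpow_pos by (auto || apply Rdiv_lt_0_compat; auto).
    unfold Rdiv at 1. rewrite <- Rpower_mult_distr by (auto || apply Rinv_0_lt_compat; auto).
    replace (Rpower (/W) (1/q)) with (Rpower W (- (1/q))) by (unfold Rpower; rewrite ln_Rinv by lra; f_equal; ring).
    unfold p, Rminus. rewrite (Rpower_plus 1 (- (1/q)) W), Rpower_1 by auto.
    ring.
  - rewrite <- HV0. rewrite rpow_0_l by lra. rewrite Rmult_0_r.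
    apply Rnot_lt_le. intros HX.
    set (A := rpow (X / (2 * W)) (/ p)).
    assert (HA : 0 < A) by (apply rpow_gt0; apply Rdiv_lt_0_compat; lra).
    assert (EA : rpow A p = X / (2 * W)).
    { unfold A. rewrite rpow_mult. rewrite Rinv_l by lra. apply rpow_1_r.
      left; apply Rdiv_lt_0_compat; lra. left; apply Rdiv_lt_0_compat; lra.
      apply Rinv_neq_0_compat; lra. rewrite Rinv_l; lra. }
    specialize (Hbound A HA). rewrite <- HV0 in Hbound. fold p in Hbound.
    assert (E2 : rpow A (p - 1) = rpow A p / A).
    { rewrite !rpow_pos by auto. unfold Rminus. rewrite Rpower_plus.
      replace (-(1)) with (- (1)) by ring. rewrite Rpower_Ropp, Rpower_1 by auto. reflexivity. }
    rewrite E2, EA in Hbound.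
    replace (X / (2 * W) * W + p * (X / (2 * W) / A) * (0 - A * W)) with (X * (1 - p) / 2) in Hbound by (field; lra).
    nra.
Qed.

Ltac rfield := match goal with |- @eq _ ?a ?b => change (@eq R a b) end; field.

Lemma rpow_plus_pos t a b : 0 < t -> rpow t (a + b) = rpow t a * rpow t b.
Proof. intros; rewrite !rpow_pos by auto; apply Rpower_plus. Qed.

Lemma int_k th lam al : 0 < th -> 0 <= lam <= 1 -> 0 <= al ->
  RInt (fun t => Rabs (rpow t th - lam) * rpow t al) 0 1 = Aconst2 al th lam.
Proof.
  intros Hth Hl Hal.
  set (Psi := fun t => rpow t (th + al + 1) / (th + al + 1) - lam * rpow t (al + 1) / (al + 1)).
  set (dPsi := fun t => rpow t th * rpow t al - lam * rpow t al).
  assert (dP : forall x, 0 < x -> derivable_pt_lim Psi x (dPsi x)).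
  { intros x Hx. unfold Psi, dPsi.
    replace (rpow x th * rpow x al - lam * rpow x al) with
      (((th + al + 1) * rpow x (th + al + 1 - 1)) * / (th + al + 1) - lam * ((al + 1) * rpow x (al + 1 - 1)) * / (al + 1)).
    apply derivable_pt_lim_minus.
    apply (derivable_pt_lim_scal_right (fun t => rpow t (th + al + 1))). apply deriv_rpow; auto.
    apply (derivable_pt_lim_scal_right (fun t => lam * rpow t (al + 1))).
    apply derivable_pt_lim_scal. apply deriv_rpow; auto.
    replace (th + al + 1 - 1) with (th + al) by ring. replace (al + 1 - 1) with al by ring.
    rewrite rpow_plus_pos by auto. field. lra. }
  assert (cP : forall x, continuity_pt Psi x).
  { intros x. unfold Psi. apply continuity_pt_minus.
    apply continuity_pt_mult. apply continuity_rpow; lra. apply cpt_const.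
    apply continuity_pt_mult. apply continuity_pt_mult. apply cpt_const. apply continuity_rpow; lra.
    apply cpt_const. }
  assert (cdP : forall x, continuity_pt dPsi x).
  { intros x. unfold dPsi. apply continuity_pt_minus. apply continuity_pt_mult; apply continuity_rpow; lra.
    apply continuity_pt_mult. apply cpt_const. apply continuity_rpow; lra. }
  assert (P0 : Psi 0 = 0).
  { unfold Psi. rewrite !rpow_0_l by lra. field; lra. }
  assert (P1 : Psi 1 = 1 / (th + al + 1) - lam / (al + 1)).
  { unfold Psi. rewrite !rpow_1. field; lra. }
  assert (cw : forall x, continuity_pt (fun t => Rabs (rpow t th - lam) * rpow t al) x).
  { intros x. apply continuity_pt_mult. apply continuity_pt_comp with (f2 := Rabs).
    apply continuity_pt_minus. apply continuity_rpow; lra. apply cpt_const. apply Rcontinuity_abs.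
    apply continuity_rpow; lra. }
  unfold Aconst2.
  destruct (Rle_lt_or_eq_dec _ _ (proj1 Hl)) as [Hl0| <-].
  - set (t0 := rpow lam (/ th)).
    assert (Ht0 : 0 < t0) by (apply rpow_gt0; auto).
    assert (Et0 : rpow t0 th = lam) by (unfold t0; apply rpow_inv_pow; lra).
    assert (Ht01 : t0 <= 1).
    { unfold t0. rewrite <- (rpow_1 (/ th)). apply rpow_le_l. left; apply Rinv_0_lt_compat; auto. lra. }
    rewrite <- (RInt_ChaslesR _ 0 t0 1) by (apply ex_RInt_cont; [lra|intros x _; auto]).
    rewrite (RInt_extR _ (fun t => -1 * dPsi t) 0 t0).
    2:{ intros x Hx. rewrite Rmin_left, Rmax_right in Hx by lra. unfold dPsi.
        assert (rpow x th <= lam) by (rewrite <- Et0; apply rpow_le_l; lra).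
        rewrite Rabs_left1 by lra. ring. }
    rewrite (RInt_extR _ dPsi t0 1).
    2:{ intros x Hx. rewrite Rmin_left, Rmax_right in Hx by lra. unfold dPsi.
        assert (lam <= rpow x th) by (rewrite <- Et0; apply rpow_le_l; lra).
        rewrite Rabs_right by lra. ring. }
    rewrite RInt_scalR by (apply ex_RInt_cont; [lra|intros x _; auto]).
    rewrite (FTC0 Psi dPsi 0 t0); auto; [|intros x Hx; apply dP; lra|intros x _; auto].
    rewrite (FTC Psi dPsi t0 1); auto; [|intros x Hx; apply dP; lra|intros x _; auto].
    rewrite P0, P1.
    set (s := rpow t0 (al + 1)).
    assert (Es : s = rpow lam ((1 + al) / th)).
    { unfold s, t0. rewrite rpow_mult by (lra || (apply Rinv_neq_0_compat; lra) || (apply Rmult_integral_contrapositive; split; [apply Rinv_neq_0_compat|]; lra)).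
      f_equal. field. lra. }
    assert (Ept : Psi t0 = lam * s / (th + al + 1) - lam * s / (al + 1)).
    { unfold Psi. replace (th + al + 1) with (th + (al + 1)) at 1 by ring.
      rewrite rpow_plus_pos, Et0 by auto. fold s. reflexivity. }
    rewrite Ept.
    replace (1 + (1 + al) / th) with (1 + (1 + al) / th) by ring.
    rewrite rpow_plus_pos, rpow_1_r, <- Es by lra.
    rfield. lra.
  - assert (E : forall x, 0 < x -> Rabs (rpow x th - 0) * rpow x al = dPsi x).
    { intros x Hx. unfold dPsi. rewrite Rminus_0_r, Rabs_right. ring. apply Rle_ge, rpow_ge0. }
    rewrite (RInt_extR _ dPsi 0 1).
    2:{ intros x Hx. rewrite Rmin_left, Rmax_right in Hx by lra. apply E; lra. }
    rewrite (FTC0 Psi dPsi 0 1); auto; [|lra|intros x Hx; apply dP; lra|intros x _; auto].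
    rewrite P0, P1. rewrite rpow_0_l.
    rfield. lra.
    apply Rplus_lt_le_0_compat. lra. apply Rmult_le_pos. lra. left; apply Rinv_0_lt_compat; auto.
Qed.

Lemma int_k1 th lam : 0 < th -> 0 <= lam <= 1 ->
  RInt (fun t => Rabs (rpow t th - lam)) 0 1 = Aconst1 th lam.
Proof.
  intros Hth Hl. rewrite (RInt_extR _ (fun t => Rabs (rpow t th - lam) * rpow t 0)).
  rewrite int_k by lra. unfold Aconst1, Aconst2. replace (1 + (1 + 0) / th) with (1 + 1 / th) by (field; lra).
  rfield. lra. intros; rewrite rpow_0; ring.
Qed.

Lemma W_pos th lam : 0 < th -> 0 <= lam <= 1 -> 0 < RInt (fun t => Rabs (rpow t th - lam)) 0 1.
Proof.
  intros Hth Hl.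
  assert (cw : forall x, continuity_pt (fun t => Rabs (rpow t th - lam)) x).
  { intros x. apply continuity_pt_comp with (f2 := Rabs).
    apply continuity_pt_minus. apply continuity_rpow; lra. apply cpt_const. apply Rcontinuity_abs. }
  destruct (Rle_lt_or_eq_dec _ _ (proj1 Hl)) as [Hl0| <-].
  - set (t0 := rpow lam (/ th)).
    assert (Ht0 : 0 < t0) by (apply rpow_gt0; auto).
    assert (Et0 : rpow t0 th = lam) by (unfold t0; apply rpow_inv_pow; lra).
    assert (Ht01 : t0 <= 1).
    { unfold t0. rewrite <- (rpow_1 (/ th)). apply rpow_le_l. left; apply Rinv_0_lt_compat; auto. lra. }
    rewrite <- (RInt_ChaslesR _ 0 t0 1) by (apply ex_RInt_cont; [lra|intros x _; auto]).
    assert (0 < RInt (fun t => Rabs (rpow t th - lam)) 0 t0).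
    { apply RInt_gt_0. auto. intros x Hx. apply Rabs_pos_lt.
      assert (rpow x th < lam) by (rewrite <- Et0; apply rpow_lt_l; lra). lra.
      intros x _. apply cpt_cont; auto. }
    assert (0 <= RInt (fun t => Rabs (rpow t th - lam)) t0 1).
    { apply RInt_ge_0. auto. apply ex_RInt_cont; [lra|intros x _; auto]. intros; apply Rabs_pos. }
    lra.
  - apply RInt_gt_0. lra. intros x Hx. apply Rabs_pos_lt. rewrite Rminus_0_r.
    assert (0 < rpow x th) by (apply rpow_gt0; lra). lra.
    intros x _. apply cpt_cont; auto.
Qed.

Lemma RInt_comp_linR (g : R -> R) u v a b : ex_RInt g (u * a + v) (u * b + v) ->
  RInt (fun y => u * g (u * y + v)) a b = RInt g (u * a + v) (u * b + v).
Proof. intros H; exact (RInt_comp_lin g u v a b H). Qed.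

Lemma RInt_swapR (g : R -> R) a b : ex_RInt g a b -> - RInt g a b = RInt g b a.
Proof. intros H; exact (opp_RInt_swap g a b H). Qed.

Lemma RL_left_sub th f c D L : 0 < th -> 0 < D ->
  (forall s, c <= s <= c + D -> continuity_pt f s) ->
  lim0 (fun e => th * RInt (fun t => rpow t (th - 1) * f (c + D * t)) e 1) L ->
  Gamma (th + 1) * RL_left th f c (c + D) = rpow D th * L.
Proof.
  intros Hth HD Hf HL. destruct (Gamma_rec th Hth) as [HG HG0].
  unfold RL_left. destruct (Req_EM_T c (c + D)) as [E|_]; [lra|].
  rewrite (lim0p_eq _ (D * rpow D (th - 1) / th * L)).
  { rewrite HG. rewrite (rpow_pos D th) by auto. rewrite (rpow_pos D (th - 1)) by auto.
    replace (Rpower D th) with (D * Rpower D (th - 1)).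
    field. split; lra.
    rewrite <- (Rpower_1 D) at 1 by auto. rewrite <- Rpower_plus. f_equal; ring. }
  apply (lim0_ext (fun h => D * rpow D (th - 1) / th * (th * RInt (fun t => rpow t (th - 1) * f (c + D * t)) (h / D) 1))) with D; auto.
  2:{ apply lim0_scal. apply (lim0_comp_scal (fun e => th * RInt (fun t => rpow t (th - 1) * f (c + D * t)) e 1)); auto. }
  intros h Hh.
  set (g := fun s => rpow (s - c) (th - 1) * f s).
  assert (exg : ex_RInt g (c + h) (c + D)).
  { apply ex_RInt_cont. lra. intros x Hx. unfold g. apply continuity_pt_mult.
    apply continuity_pt_comp with (f2 := fun s => rpow s (th - 1)). apply continuity_pt_minus.
    apply derivable_continuous_pt, derivable_pt_id. apply cpt_const. apply continuity_rpow_pos; lra.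
    apply Hf; lra. }
  rewrite Rint_RInt by exact exg. fold g.
  replace (c + h) with (D * (h / D) + c) by (field; lra).
  replace (c + D) with (D * 1 + c) by ring.
  rewrite <- RInt_comp_linR.
  2:{ replace (D * (h / D) + c) with (c + h) by (field; lra). replace (D * 1 + c) with (c + D) by ring. exact exg. }
  rewrite (RInt_extR (fun y => D * g (D * y + c)) (fun t => (D * rpow D (th - 1)) * (rpow t (th - 1) * f (c + D * t)))).
  rewrite RInt_scalR. field. lra.
  apply ex_RInt_cont. apply Rmult_le_reg_r with D; auto. unfold Rdiv; rewrite Rmult_assoc, Rinv_l; lra.
  intros x Hx. apply continuity_pt_mult. apply continuity_rpow_pos.
  assert (0 < h / D) by (apply Rdiv_lt_0_compat; lra). lra.
  apply continuity_pt_comp with (f2 := f). apply continuity_pt_plus. apply cpt_const.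
  apply continuity_pt_mult. apply cpt_const. apply derivable_continuous_pt, derivable_pt_id.
  apply Hf. assert (0 < h / D) by (apply Rdiv_lt_0_compat; lra). split. nra. nra.
  intros y Hy. assert (0 < h / D) by (apply Rdiv_lt_0_compat; lra).
  rewrite Rmin_left, Rmax_right in Hy. unfold g.
  replace (D * y + c - c) with (D * y) by ring. replace (D * y + c) with (c + D * y) by ring.
  rewrite !rpow_pos by nra. rewrite <- Rpower_mult_distr by lra. ring.
  apply Rmult_le_reg_r with D; auto. unfold Rdiv; rewrite Rmult_assoc, Rinv_l; lra.
  apply Rmult_le_reg_r with D; auto. unfold Rdiv; rewrite Rmult_assoc, Rinv_l; lra.
Qed.

Lemma RL_right_sub th f d D L : 0 < th -> 0 < D ->
  (forall s, d - D <= s <= d -> continuity_pt f s) ->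
  lim0 (fun e => th * RInt (fun t => rpow t (th - 1) * f (d - D * t)) e 1) L ->
  Gamma (th + 1) * RL_right th f (d - D) d = rpow D th * L.
Proof.
  intros Hth HD Hf HL. destruct (Gamma_rec th Hth) as [HG HG0].
  unfold RL_right. destruct (Req_EM_T (d - D) d) as [E|_]; [lra|].
  rewrite (lim0p_eq _ (D * rpow D (th - 1) / th * L)).
  { rewrite HG. rewrite (rpow_pos D th) by auto. rewrite (rpow_pos D (th - 1)) by auto.
    replace (Rpower D th) with (D * Rpower D (th - 1)).
    field. split; lra.
    rewrite <- (Rpower_1 D) at 1 by auto. rewrite <- Rpower_plus. f_equal; ring. }
  apply (lim0_ext (fun h => D * rpow D (th - 1) / th * (th * RInt (fun t => rpow t (th - 1) * f (d - D * t)) (h / D) 1))) with D; auto.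
  2:{ apply lim0_scal. apply (lim0_comp_scal (fun e => th * RInt (fun t => rpow t (th - 1) * f (d - D * t)) e 1)); auto. }
  intros h Hh.
  assert (HhD : 0 < h / D) by (apply Rdiv_lt_0_compat; lra).
  assert (HhD1 : h / D <= 1) by (apply Rmult_le_reg_r with D; auto; unfold Rdiv; rewrite Rmult_assoc, Rinv_l; lra).
  set (g := fun s => rpow (d - s) (th - 1) * f s).
  assert (exg : ex_RInt g (d - D) (d - h)).
  { apply ex_RInt_cont. lra. intros x Hx. unfold g. apply continuity_pt_mult.
    apply continuity_pt_comp with (f2 := fun s => rpow s (th - 1)). apply continuity_pt_minus.
    apply cpt_const. apply derivable_continuous_pt, derivable_pt_id. apply continuity_rpow_pos; lra.
    apply Hf; lra. }
  rewrite Rint_RInt by exact exg. fold g.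
  replace (d - D) with (- D * 1 + d) by ring.
  replace (d - h) with (- D * (h / D) + d) by (field; lra).
  rewrite <- RInt_comp_linR.
  2:{ replace (- D * (h / D) + d) with (d - h) by (field; lra). replace (- D * 1 + d) with (d - D) by ring. exact exg. }
  assert (exi : ex_RInt (fun t => rpow t (th - 1) * f (d - D * t)) (h / D) 1).
  { apply ex_RInt_cont. auto.
    intros x Hx. apply continuity_pt_mult. apply continuity_rpow_pos. lra.
    apply continuity_pt_comp with (f2 := f). apply continuity_pt_minus. apply cpt_const.
    apply continuity_pt_mult. apply cpt_const. apply derivable_continuous_pt, derivable_pt_id.
    apply Hf. split; nra. }
  rewrite <- (RInt_swapR (fun y => - D * g (- D * y + d))).
  rewrite (RInt_extR (fun y => - D * g (- D * y + d)) (fun t => (- (D * rpow D (th - 1))) * (rpow t (th - 1) * f (d - D * t)))).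
  rewrite RInt_scalR by exact exi. rfield. lra.
  intros y Hy. rewrite Rmin_left, Rmax_right in Hy by lra. unfold g.
  replace (d - (- D * y + d)) with (D * y) by ring. replace (- D * y + d) with (d - D * y) by ring.
  rewrite !rpow_pos by nra. rewrite <- Rpower_mult_distr by lra. ring.
  apply (ex_RInt_ext (fun t => (- (D * rpow D (th - 1))) * (rpow t (th - 1) * f (d - D * t)))).
  intros y Hy. rewrite Rmin_left, Rmax_right in Hy by lra. unfold g.
  replace (d - (- D * y + d)) with (D * y) by ring. replace (- D * y + d) with (d - D * y) by ring.
  rewrite !rpow_pos by nra. rewrite <- Rpower_mult_distr by lra. simpl. ring.
  apply (ex_RInt_scal (V := R_NormedModule)). exact exi.
Qed.

Lemma dlin P Q t : derivable_pt_lim (fun t => P + (Q - P) * t) t (Q - P).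
Proof.
  assert (H : derivable_pt_lim (fun t => P + (Q - P) * t) t (0 + (Q - P) * 1)).
  { apply (derivable_pt_lim_plus (fun _ => P) (fun t => (Q - P) * t)). apply derivable_pt_lim_const.
    apply derivable_pt_lim_scal. apply derivable_pt_lim_id. }
  replace (0 + (Q - P) * 1) with (Q - P) in H by ring. exact H.
Qed.

Lemma rpow_inv_q y q : 0 <= y -> 1 <= q -> rpow (rpow y q) (1 / q) = y.
Proof.
  intros Hy Hq. rewrite rpow_mult by (auto; try lra; try (apply Rmult_integral_contrapositive; split; try lra; unfold Rdiv; apply Rmult_integral_contrapositive; split; try lra; apply Rinv_neq_0_compat; lra)).
  replace (q * (1 / q)) with 1 by (field; lra). apply rpow_1_r; auto.
Qed.

Lemma side q f f' m alpha th lam P Q gY : 1 <= q -> 0 < m -> 0 <= alpha <= 1 -> 0 < th ->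
  0 <= lam <= 1 -> 0 <= gY ->
  (forall t, 0 <= t <= 1 -> derivable_pt_lim f (P + (Q - P) * t) (f' (P + (Q - P) * t))) ->
  (forall t, 0 <= t <= 1 -> rpow (Rabs (f' (P + (Q - P) * t))) q <=
       rpow t alpha * rpow (Rabs (f' Q)) q + m * (1 - rpow t alpha) * gY) ->
  exists L, lim0 (fun e => th * RInt (fun t => rpow t (th - 1) * f (P + (Q - P) * t)) e 1) L /\
   Rabs ((1 - lam) * f Q + lam * f P - L) <= Rabs (Q - P) *
     (rpow (Aconst1 th lam) (1 - 1 / q) *
      rpow (rpow (Rabs (f' Q)) q * Aconst2 alpha th lam + m * gY * Aconst3 alpha th lam) (1 / q)).
Proof.
  intros Hq Hm Hal Hth Hl HgY Hd Hc.
  set (gQ := rpow (Rabs (f' Q)) q).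
  assert (HgQ : 0 <= gQ) by apply rpow_ge0.
  set (v := fun t => rpow t alpha * gQ + m * (1 - rpow t alpha) * gY).
  set (hh := fun t => rpow (v t) (1 / q)).
  assert (Hq1 : 0 < 1 / q) by (apply Rdiv_lt_0_compat; lra).
  assert (cv : forall x, continuity_pt v x).
  { intros x. unfold v. apply continuity_pt_plus. apply continuity_pt_mult. apply continuity_rpow; lra.
    apply cpt_const. apply continuity_pt_mult. apply continuity_pt_mult. apply cpt_const.
    apply continuity_pt_minus. apply cpt_const. apply continuity_rpow; lra. apply cpt_const. }
  assert (chh : forall x, continuity_pt hh x).
  { intros x. unfold hh. apply continuity_pt_comp with (f2 := fun s => rpow s (1 / q)). auto.
    apply continuity_rpow; lra. }
  assert (vpos : forall t, 0 <= t <= 1 -> 0 <= v t).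
  { intros t Ht. unfold v. assert (rpow t alpha <= 1) by (rewrite <- (rpow_1 alpha); apply rpow_le_l; lra).
    pose proof (rpow_ge0 t alpha). apply Rplus_le_le_0_compat. nra.
    apply Rmult_le_pos; [|auto]. nra. }
  destruct (core th lam (fun t => f (P + (Q - P) * t)) (fun t => f' (P + (Q - P) * t) * (Q - P))
              (fun t => Rabs (Q - P) * hh t)) as [L [HL Hb]]; auto.
  { intros t Ht. apply (derivable_pt_lim_comp (fun t => P + (Q - P) * t) f). apply dlin. apply Hd; auto. }
  { intros t Ht. rewrite Rabs_mult, Rmult_comm. apply Rmult_le_compat_l. apply Rabs_pos.
    unfold hh. rewrite <- (rpow_inv_q (Rabs (f' (P + (Q - P) * t))) q) by (auto; apply Rabs_pos).
    apply rpow_le_l. lra. split. apply rpow_ge0. apply Hc; auto. }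
  { intros x. apply continuity_pt_mult. apply cpt_const. auto. }
  exists L. split; auto.
  replace (P + (Q - P) * 1) with Q in Hb by ring. replace (P + (Q - P) * 0) with P in Hb by ring.
  eapply Rle_trans. apply Hb.
  set (k := fun t => Rabs (rpow t th - lam)).
  assert (ck : forall x, continuity_pt k x).
  { intros x. apply continuity_pt_comp with (f2 := Rabs).
    apply continuity_pt_minus. apply continuity_rpow; lra. apply cpt_const. apply Rcontinuity_abs. }
  assert (ex : forall g, (forall x, continuity_pt g x) -> ex_RInt g 0 1).
  { intros g Hg. apply ex_RInt_cont. lra. intros x _; apply Hg. }
  rewrite (RInt_extR _ (fun t => Rabs (Q - P) * (k t * hh t))) by (intros; unfold k; ring).
  rewrite RInt_scalR by (apply ex; intros; apply continuity_pt_mult; auto).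
  apply Rmult_le_compat_l. apply Rabs_pos.
  assert (HW : RInt k 0 1 = Aconst1 th lam) by (apply int_k1; auto).
  eapply Rle_trans. apply (holder q k v); auto.
  intros; apply Rabs_pos. rewrite HW. rewrite <- HW. apply W_pos; auto.
  rewrite HW. apply Rmult_le_compat_l. apply rpow_ge0.
  right. f_equal.
  rewrite (RInt_extR _ (fun t => gQ * (Rabs (rpow t th - lam) * rpow t alpha) + (m * gY) * (k t - Rabs (rpow t th - lam) * rpow t alpha))) by (intros; unfold k, v; ring).
  assert (e1 : ex_RInt (fun t => Rabs (rpow t th - lam) * rpow t alpha) 0 1).
  { apply ex. intros. apply continuity_pt_mult. apply ck. apply continuity_rpow; lra. }
  assert (e2 : ex_RInt k 0 1) by (apply ex; auto).
  set (k2 := fun t => Rabs (rpow t th - lam) * rpow t alpha).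
  rewrite (RInt_plusR (fun t => gQ * k2 t) (fun t => m * gY * (k t - k2 t))).
  rewrite (RInt_scalR k2 gQ), (RInt_scalR (fun t => k t - k2 t) (m * gY)), (RInt_minusR k k2).
  unfold k2. rewrite HW, int_k by (auto; lra).
  unfold Aconst3. rring.
  all: auto.
  apply (ex_RInt_minus (V := R_NormedModule)); auto.
  apply (ex_RInt_scal (V := R_NormedModule)); auto.
  apply (ex_RInt_scal (V := R_NormedModule)). apply (ex_RInt_minus (V := R_NormedModule)); auto.
Qed.

Lemma interior_in I z : interior I z -> I z.
Proof. intros [d Hd]. apply Hd. unfold disc. rewrite Rminus_diag, Rabs_R0. apply cond_pos. Qed.

Lemma interior_between I u v z : is_interval I -> interior I u -> interior I v -> u <= z <= v -> interior I z.
Proof.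
  intros HI Hu Hv Hz.
  destruct (Req_dec z u) as [->|Hzu]; auto. destruct (Req_dec z v) as [->|Hzv]; auto.
  assert (Hd : 0 < Rmin (z - u) (v - z)) by (apply Rmin_pos; lra).
  exists (mkposreal _ Hd). intros y Hy. unfold disc in Hy; simpl in Hy.
  assert (Rmin (z - u) (v - z) <= z - u) by apply Rmin_l. assert (Rmin (z - u) (v - z) <= v - z) by apply Rmin_r.
  apply Rabs_def2 in Hy. apply (HI u y v). apply interior_in; auto. apply interior_in; auto. lra.
Qed.

Lemma rpow_mult_distr x y z : 0 <= x -> 0 <= y -> 0 < z -> rpow (x * y) z = rpow x z * rpow y z.
Proof.
  intros Hx Hy Hz. destruct (Rle_lt_or_eq_dec _ _ Hx) as [Hx'| <-].
  destruct (Rle_lt_or_eq_dec _ _ Hy) as [Hy'| <-].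
  rewrite !rpow_pos by nra. rewrite Rpower_mult_distr; auto.
  rewrite Rmult_0_r, !rpow_0_l by lra. ring.
  rewrite Rmult_0_l, !rpow_0_l by lra. ring.
Qed.

Lemma rpow_succ x th : 0 <= x -> 0 < th -> rpow x (th + 1) = x * rpow x th.
Proof.
  intros Hx Hth. destruct (Rle_lt_or_eq_dec _ _ Hx) as [Hx'| <-].
  rewrite rpow_plus_pos, rpow_1_r by lra. ring.
  rewrite !rpow_0_l by lra. ring.
Qed.

Theorem theorem2p3 (q : R) (Hq : 1 <= q)
  (I : R -> Prop) (f f' : R -> R) (m alpha a b : R)
  (HI : is_interval I) (HI0 : forall z, I z -> 0 <= z)
  (Hm : 0 < m <= 1) (Halpha : 0 <= alpha <= 1) (Hab : a < b)
  (Hma : interior I (m * a)) (Hb : interior I b)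
  (Hdf : forall y, interior I y -> derivable_pt_lim f y (f' y))
  (Hconv : alpha_m_convex alpha m (fun z => m * a <= z <= b)
             (fun z => rpow (Rabs (f' z)) q)) :
  forall x lam th, a <= x <= b -> 0 <= lam <= 1 -> 0 < th ->
  Rabs (S_RL f m x lam th a b) <=
    rpow m th * rpow (Aconst1 th lam) (1 - 1 / q) / (b - a) *
    ( rpow (x - a) (th + 1) *
        rpow (rpow (Rabs (f' (m * x))) q * Aconst2 alpha th lam
              + m * rpow (Rabs (f' a)) q * Aconst3 alpha th lam) (1 / q)
    + rpow (b - x) (th + 1) *
        rpow (rpow (Rabs (f' (m * x))) q * Aconst2 alpha th lam
              + m * rpow (Rabs (f' b)) q * Aconst3 alpha th lam) (1 / q) ).
Proof.
  intros x lam th Hx Hl Hth.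
  assert (Hma0 : 0 <= m * a) by (apply HI0, interior_in; auto).
  assert (Ha0 : 0 <= a) by nra.
  assert (Hmxb : m * x <= b) by nra.
  assert (Hmab : m * a <= m * x) by nra.
  assert (Hmb : m * x <= m * b) by nra.
  assert (Hmbb : m * b <= b) by nra.
  assert (Hint : forall z, m * a <= z <= b -> interior I z).
  { intros z Hz. apply (interior_between I (m * a) b); auto. }
  assert (Hd' : forall z, m * a <= z <= b -> derivable_pt_lim f z (f' z)).
  { intros z Hz. apply Hdf, Hint; auto. }
  assert (cf : forall z, m * a <= z <= b -> continuity_pt f z).
  { intros z Hz. apply derivable_continuous_pt. exists (f' z). apply Hd'; auto. }
  assert (dL : forall t, 0 <= t <= 1 -> derivable_pt_lim f (m * a + (m * x - m * a) * t) (f' (m * a + (m * x - m * a) * t))).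
  { intros t Ht. apply Hd'. split; nra. }
  assert (cL : forall t, 0 <= t <= 1 -> rpow (Rabs (f' (m * a + (m * x - m * a) * t))) q <=
       rpow t alpha * rpow (Rabs (f' (m * x))) q + m * (1 - rpow t alpha) * rpow (Rabs (f' a)) q).
  { intros t Ht. replace (m * a + (m * x - m * a) * t) with (t * (m * x) + m * (1 - t) * a) by ring.
    apply Hconv; try lra; try nra; try (split; nra). }
  destruct (side q f f' m alpha th lam (m * a) (m * x) (rpow (Rabs (f' a)) q) Hq ltac:(lra) Halpha Hth Hl
     ltac:(apply rpow_ge0) dL cL) as [LL [HLL HBL]].
  assert (dR : forall t, 0 <= t <= 1 -> derivable_pt_lim f (m * b + (m * x - m * b) * t) (f' (m * b + (m * x - m * b) * t))).
  { intros t Ht. apply Hd'. split; nra. }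
  assert (cR : forall t, 0 <= t <= 1 -> rpow (Rabs (f' (m * b + (m * x - m * b) * t))) q <=
       rpow t alpha * rpow (Rabs (f' (m * x))) q + m * (1 - rpow t alpha) * rpow (Rabs (f' b)) q).
  { intros t Ht. replace (m * b + (m * x - m * b) * t) with (t * (m * x) + m * (1 - t) * b) by ring.
    apply Hconv; try lra; try nra; try (split; nra). }
  destruct (side q f f' m alpha th lam (m * b) (m * x) (rpow (Rabs (f' b)) q) Hq ltac:(lra) Halpha Hth Hl
     ltac:(apply rpow_ge0) dR cR) as [LR [HLR HBR]].
  assert (RLL : Gamma (th + 1) * RL_left th f (m * a) (m * x) = rpow (m * x - m * a) th * LL).
  { destruct (Rle_lt_or_eq_dec _ _ (proj1 Hx)) as [Hxa| <-].
    - pose proof (RL_left_sub th f (m * a) (m * x - m * a) LL Hth ltac:(nra)) as E.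
      replace (m * a + (m * x - m * a)) with (m * x) in E by ring. apply E; auto.
      intros s Hs. apply cf; lra.
    - unfold RL_left. destruct (Req_EM_T (m * a) (m * a)) as [_|E]; [|congruence].
      rewrite Rminus_diag, rpow_0_l by lra. ring. }
  assert (RLR : Gamma (th + 1) * RL_right th f (m * x) (m * b) = rpow (m * b - m * x) th * LR).
  { destruct (Rle_lt_or_eq_dec _ _ (proj2 Hx)) as [Hxb| ->].
    - pose proof (RL_right_sub th f (m * b) (m * b - m * x) LR Hth ltac:(nra)) as E.
      replace (m * b - (m * b - m * x)) with (m * x) in E by ring. apply E; auto.
      intros s Hs. apply cf; lra.
      apply (lim0_ext (fun e => th * RInt (fun t => rpow t (th - 1) * f (m * b + (m * x - m * b) * t)) e 1)) with 1; auto. lra.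
      intros h Hh. f_equal. apply RInt_extR. intros t _. do 2 f_equal. ring.
    - unfold RL_right. destruct (Req_EM_T (m * b) (m * b)) as [_|E]; [|congruence].
      rewrite Rminus_diag, rpow_0_l by lra. ring. }
  set (ra := rpow (x - a) th). set (rb := rpow (b - x) th).
  set (M1 := rpow m (th - 1)).
  assert (HMt : rpow m th = m * M1).
  { unfold M1. rewrite !rpow_pos by lra. rewrite <- (Rpower_1 m) at 2 by lra. rewrite <- Rpower_plus. f_equal; ring. }
  assert (EL : rpow (m * x - m * a) th = m * M1 * ra).
  { replace (m * x - m * a) with (m * (x - a)) by ring. rewrite rpow_mult_distr by lra. rewrite HMt; auto. }
  assert (ER : rpow (m * b - m * x) th = m * M1 * rb).
  { replace (m * b - m * x) with (m * (b - x)) by ring. rewrite rpow_mult_distr by lra. rewrite HMt; auto. }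
  set (TL := (1 - lam) * f (m * x) + lam * f (m * a) - LL).
  set (TR := (1 - lam) * f (m * x) + lam * f (m * b) - LR).
  assert (ES : S_RL f m x lam th a b = M1 / (b - a) * (ra * TL + rb * TR)).
  { unfold S_RL. fold M1 ra rb.
    replace (Gamma (th + 1) / (m * (b - a)) * (RL_left th f (m * a) (m * x) + RL_right th f (m * x) (m * b)))
      with ((Gamma (th + 1) * RL_left th f (m * a) (m * x) + Gamma (th + 1) * RL_right th f (m * x) (m * b)) / (m * (b - a)))
      by (field; lra).
    rewrite RLL, RLR, EL, ER. unfold TL, TR. field. lra. }
  rewrite ES.
  set (C := rpow (Aconst1 th lam) (1 - 1 / q)).
  set (BL := rpow (rpow (Rabs (f' (m * x))) q * Aconst2 alpha th lam + m * rpow (Rabs (f' a)) q * Aconst3 alpha th lam) (1 / q)).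
  set (BR := rpow (rpow (Rabs (f' (m * x))) q * Aconst2 alpha th lam + m * rpow (Rabs (f' b)) q * Aconst3 alpha th lam) (1 / q)).
  fold TL in HBL. fold TR in HBR. fold C BL in HBL. fold C BR in HBR.
  rewrite (Rabs_right (m * x - m * a)) in HBL by lra. rewrite (Rabs_left1 (m * x - m * b)) in HBR by nra.
  assert (HM1 : 0 <= M1) by apply rpow_ge0. assert (Hra : 0 <= ra) by apply rpow_ge0.
  assert (Hrb : 0 <= rb) by apply rpow_ge0. assert (HC : 0 <= C) by apply rpow_ge0.
  assert (HBL0 : 0 <= BL) by apply rpow_ge0. assert (HBR0 : 0 <= BR) by apply rpow_ge0.
  rewrite HMt, !rpow_succ by lra. fold ra rb.
  rewrite Rabs_mult, Rabs_right by (apply Rle_ge, Rmult_le_pos; [auto|left; apply Rinv_0_lt_compat; lra]).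
  assert (Hba : 0 < / (b - a)) by (apply Rinv_0_lt_compat; lra).
  assert (K1 : Rabs (ra * TL + rb * TR) <= ra * (m * (x - a) * (C * BL)) + rb * (m * (b - x) * (C * BR))).
  { eapply Rle_trans. apply Rabs_triang. rewrite !Rabs_mult, (Rabs_right ra), (Rabs_right rb) by lra.
    apply Rplus_le_compat; apply Rmult_le_compat_l; auto.
    replace (m * (x - a)) with (m * x - m * a) by ring. auto.
    replace (m * (b - x)) with (- (m * x - m * b)) by ring. auto. }
  unfold Rdiv. 
  apply Rle_trans with (M1 * / (b - a) * (ra * (m * (x - a) * (C * BL)) + rb * (m * (b - x) * (C * BR)))).
  apply Rmult_le_compat_l; auto. apply Rmult_le_pos; lra.
  right. ring.
Qed.
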